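(* Consider the one-dimensional Dirac equation described in the context with exact solution $\varPhi$ on $[0,T]\times[a,b]$, and suppose assumptions (A) and (B) hold. Then there exist constants $h_0>0$, $\tau_0>0$, independent of $\varepsilon$ and sufficiently small, such that for every $0<\varepsilon\le1$, $0<h\le h_0$, $0<\tau\le\tau_0$ satisfying the stability condition $0<\tau\le\frac{1}{V_{\max}+A_{1,\max}}$, the solution $\varPhi^n$ of the SIFD2 scheme described in the context satisfies $$\|\mathbf{e}^n\|_{l^2}\lesssim\frac{h^2}{\varepsilon}+\frac{\tau^2}{\varepsilon^3},\qquad 0\le n\le\frac T\tau,$$ where $\mathbf{e}^n_j=\varPhi(t_n,x_j)-\varPhi^n_j$, $\|\mathbf{e}^n\|_{l^2}^2=h\sum_{j=0}^{M-1}|\mathbf{e}^n_j|^2$, and $\lesssim$ hides a constant independent of $\varepsilon,\tau,h,n$.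
   Context: Pauli matrices: $\sigma_1=\begin{pmatrix}0&1\\1&0\end{pmatrix}$, $\sigma_3=\begin{pmatrix}1&0\\0&-1\end{pmatrix}$; $I_2$ the $2\times2$ identity. Let $\Omega=(a,b)$, $0<\varepsilon\le1$, $V,A_1$ real-valued. The equation is $$i\partial_t\varPhi=\Big(-\frac{i}{\varepsilon}\sigma_1\partial_x+\frac1\varepsilon\sigma_3\Big)\varPhi+\big(V(t,x)I_2-A_1(t,x)\sigma_1\big)\varPhi,\quad t>0,\ x\in\Omega,$$ for $\varPhi:[0,T]\times\bar\Omega\to\mathbb{C}^2$, with $\varPhi(t,a)=\varPhi(t,b)$, $\partial_x\varPhi(t,a)=\partial_x\varPhi(t,b)$, $\varPhi(0,x)=\varPhi_0(x)$, $\varPhi_0(a)=\varPhi_0(b)$, $\varPhi_0'(a)=\varPhi_0'(b)$; $0<T<T^*$ ($T^*$ the maximal existence time), $\Omega_T=[0,T]\times\Omega$. Assumption (A): $\varPhi\in C^3([0,T];(L^\infty)^2)\cap C^2([0,T];(W^{1,\infty}_p)^2)\cap C^1([0,T];(W^{2,\infty}_p)^2)\cap C([0,T];(W^{3,\infty}_p)^2)$ and $\|\partial_t^r\partial_x^s\varPhi\|_{L^\infty([0,T];(L^\infty(\Omega))^2)}\lesssim\varepsilon^{-r}$ for $0\le r\le3$, $0\le r+s\le3$, uniformly in $\varepsilon$; $W^{m,\infty}_p(\Omega)=\{u\in W^{m,\infty}(\Omega):\partial_x^lu(a)=\partial_x^lu(b),\ l<m\}$. Assumption (B): $V,A_1\in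 C(\bar\Omega_T)$; $V_{\max}=\max_{\bar\Omega_T}|V|$, $A_{1,\max}=\max_{\bar\Omega_T}|A_1|$. Discretization: $h=(b-a)/M$, $x_j=a+jh$, $t_n=n\tau$; periodic grid convention $\varPhi^n_M=\varPhi^n_0$, $\varPhi^n_{-1}=\varPhi^n_{M-1}$, $\varPhi^n_{M+1}=\varPhi^n_1$; $\delta_t\varPhi^n_j=(\varPhi^{n+1}_j-\varPhi^{n-1}_j)/(2\tau)$, $\delta_x\varPhi^n_j=(\varPhi^n_{j+1}-\varPhi^n_{j-1})/(2h)$, $V^n_j=V(t_n,x_j)$, $A^n_{1,j}=A_1(t_n,x_j)$. SIFD2 scheme: for $n\ge1$, $j=0,\dots,M-1$, $$i\delta_t\varPhi^n_j=\frac1\varepsilon(-i\sigma_1\delta_x+\sigma_3)\frac{\varPhi^{n+1}_j+\varPhi^{n-1}_j}{2}+\big(V^n_jI_2-A^n_{1,j}\sigma_1\big)\varPhi^n_j,$$ with periodic boundary values, $\varPhi^0_j=\varPhi_0(x_j)$, and first step $$\varPhi^1_j=\varPhi^0_j-\sin(\tau/\varepsilon)\sigma_1\varPhi_0'(x_j)-i\big(\sin(\tau/\varepsilon)\sigma_3+\tau V^0_jI_2-\tau A^0_{1,j}\sigma_1\big)\varPhi^0_j,\quad j=0,\dots,M.$$ *)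

(* Defs.v *)
From Stdlib Require Import Reals Lra Arith.
From Coquelicot Require Import Coquelicot.
Open Scope R_scope.

Definition V2 : Type := (C * C)%type.
Definition vadd (u v : V2) : V2 := (Cplus (fst u) (fst v), Cplus (snd u) (snd v)).
Definition vscal (c : C) (v : V2) : V2 := (Cmult c (fst v), Cmult c (snd v)).
Definition vrscal (r : R) (v : V2) : V2 := vscal (RtoC r) v.
Definition vsub (u v : V2) : V2 := vadd u (vrscal (-1) v).
Definition sigma1 (v : V2) : V2 := (snd v, fst v).
Definition sigma3 (v : V2) : V2 := (fst v, Copp (snd v)).
Definition vnorm (v : V2) : R := sqrt (Cmod (fst v) ^ 2 + Cmod (snd v) ^ 2).

Definition free_op (eps : R) (ux u : V2) : V2 :=
  vrscal (/ eps) (vadd (vscal (Copp Ci) (sigma1 ux)) (sigma3 u)).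
Definition pot_op (Vv Av : R) (u : V2) : V2 := vsub (vrscal Vv u) (vrscal Av (sigma1 u)).
Definition dirac_eq (eps Vv Av : R) (ut ux u : V2) : Prop :=
  vscal Ci ut = vadd (free_op eps ux u) (pot_op Vv Av u).

Definition supbnd (a b : R) (f : R -> V2) (c : R) : Prop :=
  forall x, a <= x <= b -> vnorm (f x) <= c.
Definition lipbnd (a b : R) (f : R -> V2) (c : R) : Prop :=
  forall x y, a <= x <= b -> a <= y <= b -> vnorm (vsub (f x) (f y)) <= c * Rabs (x - y).
(* g s plays the role of the s-th x-derivative of a function u in W^{m,oo}(a,b);
   Wbnd m a b g c : all the seminorms ||d_x^s u||_{L^oo}, s <= m, are <= c,
   where ||d_x^m u||_{L^oo} (m >= 1) equals the Lipschitz constant of d_x^(m-1) u. *)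
Definition Wbnd (m : nat) (a b : R) (g : nat -> R -> V2) (c : R) : Prop :=
  (forall s, (s <= m - 1)%nat -> supbnd a b (g s) c) /\
  ((1 <= m)%nat -> lipbnd a b (g (m - 1)%nat) c).
Definition xderiv (a b : R) (f f' : R -> V2) : Prop :=
  forall x, a <= x <= b -> forall e, 0 < e -> exists d, 0 < d /\
    forall y, a <= y <= b -> Rabs (y - x) < d ->
      vnorm (vsub (vsub (f y) (f x)) (vrscal (y - x) (f' x))) <= e * Rabs (y - x).

(** * Assumption (A) (qualitative part).
   D r s t x stands for d_t^r d_x^s Phi(t,x), r + s <= 3.
   Phi in C^k([0,T]; W^{3-k,oo}_p) for k = 0..3. *)
Definition regA (a b T : R) (D : nat -> nat -> R -> R -> V2) : Prop :=
  (* classical x-derivatives: d_t^r Phi(t) in W^{3-r,oo}, so it is C^{2-r} in x *)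
  (forall r s t, (r + s <= 1)%nat -> 0 <= t <= T ->
      xderiv a b (D r s t) (D r (S s) t)) /\
  (* periodicity of the space W^{3-r,oo}_p : d_x^l u(a) = d_x^l u(b), l < 3 - r *)
  (forall r s t, (r + s <= 2)%nat -> 0 <= t <= T -> D r s t a = D r s t b) /\
  (* differentiability in time, in the W^{3-k,oo} norm, of d_t^r Phi, r < k *)
  (forall k r, (k <= 3)%nat -> (r < k)%nat -> forall t, 0 <= t <= T ->
     forall e, 0 < e -> exists d, 0 < d /\ forall t', 0 <= t' <= T -> Rabs (t' - t) < d ->
       Wbnd (3 - k) a b
         (fun s x => vsub (vsub (D r s t' x) (D r s t x)) (vrscal (t' - t) (D (S r) s t x)))
         (e * Rabs (t' - t))) /\
  (* continuity in time, in the W^{3-k,oo} norm, of d_t^r Phi, r <= k *)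
  (forall k r, (k <= 3)%nat -> (r <= k)%nat -> forall t, 0 <= t <= T ->
     forall e, 0 < e -> exists d, 0 < d /\ forall t', 0 <= t' <= T -> Rabs (t' - t) < d ->
       Wbnd (3 - k) a b (fun s x => vsub (D r s t' x) (D r s t x)) e).

Definition cont_rect (T a b : R) (F : R -> R -> R) : Prop :=
  forall t x, 0 <= t <= T -> a <= x <= b -> forall e, 0 < e -> exists d, 0 < d /\
    forall t' x', 0 <= t' <= T -> a <= x' <= b -> Rabs (t' - t) < d -> Rabs (x' - x) < d ->
      Rabs (F t' x' - F t x) < e.
Definition is_absmax (T a b : R) (F : R -> R -> R) (m : R) : Prop :=
  (forall t x, 0 <= t <= T -> a <= x <= b -> Rabs (F t x) <= m) /\
  (exists t x, 0 <= t <= T /\ a <= x <= b /\ Rabs (F t x) = m).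

Definition meshh (a b : R) (M : nat) : R := (b - a) / INR M.
Definition gridx (a b : R) (M j : nat) : R := a + INR j * meshh a b M.

(* first step Phi^1_j, given Phi^0_j = u0, Phi_0'(x_j) = u0x *)
Definition first_step (eps tau Vv Av : R) (u0 u0x : V2) : V2 :=
  vsub (vsub u0 (vrscal (sin (tau / eps)) (sigma1 u0x)))
       (vscal Ci (vadd (vrscal (sin (tau / eps)) (sigma3 u0))
                       (vrscal tau (pot_op Vv Av u0)))).

(* SIFD2 equation at grid point j (0 <= j < M) with periodic indices;
   Um, U0, Up are the grid functions at times n-1, n, n+1 *)
Definition sifd2_eq (eps tau h : R) (M : nat) (Vn An : R)
    (Um U0 Up : nat -> V2) (j : nat) : Prop :=
  let avg k := vrscal (1 / 2) (vadd (Up k) (Um k)) in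
  vscal Ci (vrscal (/ (2 * tau)) (vsub (Up j) (Um j))) =
  vadd (free_op eps
          (vrscal (/ (2 * h)) (vsub (avg ((j + 1) mod M)%nat) (avg ((j + M - 1) mod M)%nat)))
          (avg j))
       (pot_op Vn An (U0 j)).

Fixpoint gsum (f : nat -> R) (M : nat) : R :=
  match M with O => 0 | S m => gsum f m + f m end.
Definition l2norm (h : R) (M : nat) (e : nat -> V2) : R :=
  sqrt (h * gsum (fun j => vnorm (e j) ^ 2) M).

(* Main.v *)
Require Import Defs.
From Stdlib Require Import Reals Lra Arith Lia Psatz.
From Coquelicot Require Import Coquelicot.
Open Scope R_scope.

Module MP1.

Definition vc1 (v : V2) : R := fst (fst v).
Definition vc2 (v : V2) : R := snd (fst v).
Definition vc3 (v : V2) : R := fst (snd v).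
Definition vc4 (v : V2) : R := snd (snd v).
Definition ip (u v : V2) : R := vc1 u * vc1 v + vc2 u * vc2 v + vc3 u * vc3 v + vc4 u * vc4 v.
Definition vzero : V2 := ((0,0),(0,0)).

Lemma pair_eq4 (a b c d a' b' c' d' : R) :
  a = a' -> b = b' -> c = c' -> d = d' -> (((a,b),(c,d)) : V2) = ((a',b'),(c',d')).
Proof. intros; subst; reflexivity. Qed.

Ltac vdes := repeat match goal with
  | v : V2 |- _ => let a:=fresh "a" in let b := fresh "b" in let c := fresh "c" in
      let d := fresh "d" in destruct v as [[a b] [c d]]
  | z : C |- _ => destruct z end.
Ltac vunf := cbv [free_op pot_op vsub vrscal vscal vadd sigma1 sigma3 Cplus Cmult Copp RtoC Ci ip vc1 vc2 vc3 vc4 vzero fst snd] in *.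
Ltac veq := vdes; vunf; apply pair_eq4; field_simplify; try reflexivity; try lra.

Lemma ip_ge0 v : 0 <= ip v v.
Proof. vdes; vunf; nra. Qed.

Lemma vn_sq v : vnorm v ^ 2 = ip v v.
Proof.
  vdes; unfold vnorm, Cmod; vunf.
  rewrite pow2_sqrt. rewrite !pow2_sqrt; try nra. 
  assert (0 <= sqrt (a ^ 2 + b ^ 2) ^ 2) by nra.
  assert (0 <= sqrt (c ^ 2 + d ^ 2) ^ 2) by nra. lra.
Qed.

Lemma vn_ge0 v : 0 <= vnorm v.
Proof. unfold vnorm; apply sqrt_pos. Qed.

Lemma sq_le (a b : R) : 0 <= b -> a ^ 2 <= b ^ 2 -> a <= b.
Proof. intros; nra. Qed.

Lemma cs v w : ip v w <= vnorm v * vnorm w.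
Proof.
  apply sq_le. apply Rmult_le_pos; apply vn_ge0.
  rewrite Rpow_mult_distr, !vn_sq. vdes; vunf.
  rename a into x1, b into x2, c into x3, d into x4, a0 into y1, b0 into y2, c0 into y3, d0 into y4.
  assert (E: (x1*x1+x2*x2+x3*x3+x4*x4)*(y1*y1+y2*y2+y3*y3+y4*y4) - (x1*y1+x2*y2+x3*y3+x4*y4)^2
    = (x1*y2-x2*y1)^2 + (x1*y3-x3*y1)^2 + (x1*y4-x4*y1)^2 + (x2*y3-x3*y2)^2
      + (x2*y4-x4*y2)^2 + (x3*y4-x4*y3)^2) by ring.
  assert (0 <= (x1*y2-x2*y1)^2 + (x1*y3-x3*y1)^2 + (x1*y4-x4*y1)^2 + (x2*y3-x3*y2)^2
      + (x2*y4-x4*y2)^2 + (x3*y4-x4*y3)^2) by (repeat apply Rplus_le_le_0_compat; apply pow2_ge_0).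
  lra.
Qed.

Lemma vn_add u v : vnorm (vadd u v) <= vnorm u + vnorm v.
Proof.
  apply sq_le. pose proof (vn_ge0 u); pose proof (vn_ge0 v); lra.
  assert (H: (vnorm u + vnorm v)^2 = vnorm u ^2 + vnorm v ^2 + 2 * (vnorm u * vnorm v)) by ring.
  rewrite H, !vn_sq. pose proof (cs u v).
  assert (ip (vadd u v) (vadd u v) = ip u u + ip v v + 2 * ip u v) by (vdes; vunf; ring).
  lra.
Qed.

Lemma vn_scal r v : vnorm (vrscal r v) = Rabs r * vnorm v.
Proof.
  assert (0 <= Rabs r * vnorm v) by (apply Rmult_le_pos; [apply Rabs_pos|apply vn_ge0]).
  apply Rle_antisym; apply sq_le; auto; try apply vn_ge0;
  rewrite Rpow_mult_distr, !vn_sq, pow2_abs; vdes; vunf; right; ring.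
Qed.

Lemma vn_sub u v : vnorm (vsub u v) <= vnorm u + vnorm v.
Proof.
  unfold vsub. eapply Rle_trans. apply vn_add. rewrite vn_scal. replace (Rabs (-1)) with 1 by (unfold Rabs; destruct Rcase_abs; lra). lra.
Qed.

Lemma vn_eq u v : ip u u = ip v v -> vnorm u = vnorm v.
Proof.
  intros. apply Rle_antisym; apply sq_le; try apply vn_ge0; rewrite !vn_sq; lra.
Qed.

Lemma vn_i v : vnorm (vscal Ci v) = vnorm v.
Proof. apply vn_eq; vdes; vunf; ring. Qed.
Lemma vn_mi v : vnorm (vscal (Copp Ci) v) = vnorm v.
Proof. apply vn_eq; vdes; vunf; ring. Qed.
Lemma vn_s1 v : vnorm (sigma1 v) = vnorm v.
Proof. apply vn_eq; vdes; vunf; ring. Qed.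
Lemma vn_s3 v : vnorm (sigma3 v) = vnorm v.
Proof. apply vn_eq; vdes; vunf; ring. Qed.

Lemma vn_pot Vv Av v : vnorm (pot_op Vv Av v) <= (Rabs Vv + Rabs Av) * vnorm v.
Proof.
  unfold pot_op. eapply Rle_trans. apply vn_sub. rewrite !vn_scal, vn_s1. lra.
Qed.

Lemma vn_free e u v : 0 < e -> vnorm (free_op e u v) <= / e * (vnorm u + vnorm v).
Proof.
  intros. unfold free_op. rewrite vn_scal, Rabs_right.
  apply Rmult_le_compat_l. left; apply Rinv_0_lt_compat; auto.
  eapply Rle_trans. apply vn_add. rewrite vn_mi, vn_s1, vn_s3. lra.
  left; apply Rinv_0_lt_compat; auto.
Qed.

Lemma c_le v : Rabs (vc1 v) <= vnorm v /\ Rabs (vc2 v) <= vnorm v /\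
   Rabs (vc3 v) <= vnorm v /\ Rabs (vc4 v) <= vnorm v.
Proof.
  pose proof (vn_ge0 v). pose proof (vn_sq v).
  repeat split; apply sq_le; auto; rewrite pow2_abs, H0; vdes; vunf; nra.
Qed.

Lemma vn_c v : vnorm v <= Rabs (vc1 v) + Rabs (vc2 v) + Rabs (vc3 v) + Rabs (vc4 v).
Proof.
  apply sq_le. pose proof (Rabs_pos (vc1 v)); pose proof (Rabs_pos (vc2 v));
  pose proof (Rabs_pos (vc3 v)); pose proof (Rabs_pos (vc4 v)); lra.
  rewrite vn_sq. unfold ip.
  pose proof (Rabs_pos (vc1 v)); pose proof (Rabs_pos (vc2 v));
  pose proof (Rabs_pos (vc3 v)); pose proof (Rabs_pos (vc4 v)).
  replace (vc1 v * vc1 v) with (Rabs (vc1 v) ^ 2) by (rewrite pow2_abs; ring).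
  replace (vc2 v * vc2 v) with (Rabs (vc2 v) ^ 2) by (rewrite pow2_abs; ring).
  replace (vc3 v * vc3 v) with (Rabs (vc3 v) ^ 2) by (rewrite pow2_abs; ring).
  replace (vc4 v * vc4 v) with (Rabs (vc4 v) ^ 2) by (rewrite pow2_abs; ring).
  nra.
Qed.

Lemma vn_zero_iff v : vnorm v = 0 -> v = vzero.
Proof.
  intros. pose proof (vn_sq v). rewrite H in H0. vdes; vunf.
  apply pair_eq4; nra.
Qed.

End MP1.
Import MP1.

Module MP2.

Definition rder (al be : R) (f g : R -> R) : Prop :=
  forall t, al <= t <= be -> forall e, 0 < e -> exists d, 0 < d /\
    forall t', al <= t' <= be -> Rabs (t' - t) < d ->
      Rabs (f t' - f t - (t' - t) * g t) <= e * Rabs (t' - t).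

Definition clamp (al be x : R) : R := Rmax al (Rmin be x).

Lemma clamp_in al be x : al <= be -> al <= clamp al be x <= be.
Proof. intros; unfold clamp, Rmax, Rmin; repeat destruct Rle_dec; lra. Qed.
Lemma clamp_id al be x : al <= x <= be -> clamp al be x = x.
Proof. intros; unfold clamp, Rmax, Rmin; repeat destruct Rle_dec; lra. Qed.
Lemma clamp_lip al be x y : al <= be -> al <= x <= be -> Rabs (clamp al be y - x) <= Rabs (y - x).
Proof. intros; unfold clamp, Rmax, Rmin; repeat destruct Rle_dec;
  unfold Rabs; repeat destruct Rcase_abs; lra. Qed.

Lemma mvi_real al be f g B : al <= be -> rder al be f g ->
  (forall t, al <= t <= be -> Rabs (g t) <= B) -> Rabs (f be - f al) <= B * (be - al).
Proof.
  intros Hab Hd Hg.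
  destruct (Req_dec al be) as [E|Hne].
  { subst. replace (f be - f be) with 0 by ring. rewrite Rabs_R0. lra. }
  set (fc := fun x => f (clamp al be x)).
  assert (Hfc: forall x, al <= x <= be -> fc x = f x) by (intros; unfold fc; rewrite clamp_id; auto).
  destruct (MVT_gen fc al be g) as [c [Hc Hmv]].
  - intros x Hx. rewrite Rmin_left in Hx by lra. rewrite Rmax_right in Hx by lra.
    apply is_derive_Reals. intros eps Heps.
    destruct (Hd x ltac:(lra) (eps/2) ltac:(lra)) as [d [Hd0 Hd1]].
    assert (Hm : 0 < Rmin d (Rmin (x - al) (be - x))).
    { repeat apply Rmin_pos; lra. }
    exists (mkposreal _ Hm). intros h Hh0 Hh. simpl in Hh.
    assert (Hh1 : Rabs h < d) by (eapply Rlt_le_trans; [exact Hh| apply Rmin_l]).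
    assert (Hh2 : Rabs h < x - al) by (eapply Rlt_le_trans; [exact Hh| eapply Rle_trans; [apply Rmin_r|apply Rmin_l]]).
    assert (Hh3 : Rabs h < be - x) by (eapply Rlt_le_trans; [exact Hh| eapply Rle_trans; [apply Rmin_r|apply Rmin_r]]).
    assert (Hxh: al <= x + h <= be) by (unfold Rabs in *; destruct Rcase_abs; lra).
    rewrite !Hfc by lra.
    specialize (Hd1 (x+h) Hxh ltac:(replace (x+h-x) with h by ring; auto)).
    replace (x + h - x) with h in Hd1 by ring.
    assert (Hah: 0 < Rabs h) by (apply Rabs_pos_lt; auto).
    replace ((f (x + h) - f x) / h - g x) with ((f (x + h) - f x - h * g x) / h) by (field; auto).
    unfold Rdiv. rewrite Rabs_mult, Rabs_inv.
    apply (Rmult_lt_reg_r (Rabs h)); auto.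
    rewrite Rmult_assoc, Rinv_l by lra. nra.
  - intros x Hx. rewrite Rmin_left in Hx by lra. rewrite Rmax_right in Hx by lra.
    unfold continuity_pt, continue_in, limit1_in, limit_in. intros eps Heps.
    destruct (Hd x Hx 1 ltac:(lra)) as [d [Hd0 Hd1]].
    pose proof (Rabs_pos (g x)).
    exists (Rmin d (eps / (Rabs (g x) + 2))). split.
    { apply Rmin_pos; auto. apply Rdiv_lt_0_compat; lra. }
    intros y [_ Hy]. simpl in *. unfold R_dist in *.
    unfold fc. rewrite (clamp_id al be x Hx).
    pose proof (clamp_lip al be x y Hab Hx) as Hcl.
    pose proof (clamp_in al be y Hab) as Hci.
    assert (Hy1 : Rabs (y - x) < d) by (eapply Rlt_le_trans; [exact Hy| apply Rmin_l]).
    assert (Hy2 : Rabs (y - x) < eps / (Rabs (g x) + 2)) by (eapply Rlt_le_trans; [exact Hy| apply Rmin_r]).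
    specialize (Hd1 _ Hci ltac:(lra)).
    set (u := clamp al be y - x) in *.
    assert (Rabs (f (clamp al be y) - f x) <= (Rabs (g x) + 1) * Rabs u).
    { replace (f (clamp al be y) - f x) with ((f (clamp al be y) - f x - u * g x) + u * g x) by ring.
      eapply Rle_trans. apply Rabs_triang. rewrite Rabs_mult. nra. }
    assert ((Rabs (g x) + 2) * Rabs (y - x) < eps).
    { apply (Rmult_lt_compat_l (Rabs (g x) + 2)) in Hy2; [|lra].
      replace ((Rabs (g x) + 2) * (eps / (Rabs (g x) + 2))) with eps in Hy2 by (field; lra). lra. }
    pose proof (Rabs_pos u). nra.
  - rewrite Rmin_left in Hc by lra. rewrite Rmax_right in Hc by lra.
    rewrite <- !Hfc by lra. rewrite Hmv, Rabs_mult, (Rabs_right (be - al)) by lra.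
    apply Rmult_le_compat_r; [lra|]. apply Hg; auto.
Qed.

End MP2.
Import MP2.

Module MP3.

Ltac vdes := repeat match goal with
  | v : V2 |- _ => let a:=fresh "a" in let b := fresh "b" in let c := fresh "c" in
      let d := fresh "d" in destruct v as [[a b] [c d]]
  | z : C |- _ => destruct z end.
Ltac vunf := cbv [free_op pot_op vsub vrscal vscal vadd sigma1 sigma3 Cplus Cmult Copp RtoC Ci ip vc1 vc2 vc3 vc4 vzero fst snd] in *.
Ltac veq := vdes; vunf; apply pair_eq4; ring.
Ltac veqf := vdes; vunf; apply pair_eq4; field.

Lemma rder_comp al be F G : xderiv al be F G ->
  rder al be (fun s => vc1 (F s)) (fun s => vc1 (G s)) /\
  rder al be (fun s => vc2 (F s)) (fun s => vc2 (G s)) /\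
  rder al be (fun s => vc3 (F s)) (fun s => vc3 (G s)) /\
  rder al be (fun s => vc4 (F s)) (fun s => vc4 (G s)).
Proof.
  intros H. repeat split; intros t Ht e He; destruct (H t Ht e He) as [d [Hd Hd']];
  exists d; split; auto; intros t' Ht' Htt; specialize (Hd' t' Ht' Htt);
  pose proof (c_le (vsub (vsub (F t') (F t)) (vrscal (t' - t) (G t)))) as Hc;
  refine (Rle_trans _ _ _ _ Hd').
  - replace (vc1 (F t') - vc1 (F t) - (t' - t) * vc1 (G t)) with
      (vc1 (vsub (vsub (F t') (F t)) (vrscal (t' - t) (G t)))) by (vdes; vunf; ring). tauto.
  - replace (vc2 (F t') - vc2 (F t) - (t' - t) * vc2 (G t)) with
      (vc2 (vsub (vsub (F t') (F t)) (vrscal (t' - t) (G t)))) by (vdes; vunf; ring). tauto.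
  - replace (vc3 (F t') - vc3 (F t) - (t' - t) * vc3 (G t)) with
      (vc3 (vsub (vsub (F t') (F t)) (vrscal (t' - t) (G t)))) by (vdes; vunf; ring). tauto.
  - replace (vc4 (F t') - vc4 (F t) - (t' - t) * vc4 (G t)) with
      (vc4 (vsub (vsub (F t') (F t)) (vrscal (t' - t) (G t)))) by (vdes; vunf; ring). tauto.
Qed.

Lemma mviV al be F G B : al <= be -> xderiv al be F G ->
  (forall t, al <= t <= be -> vnorm (G t) <= B) ->
  vnorm (vsub (F be) (F al)) <= 4 * B * (be - al).
Proof.
  intros Hab Hd Hb. destruct (rder_comp _ _ _ _ Hd) as [H1 [H2 [H3 H4]]].
  pose proof (fun t => c_le (G t)) as Hc.
  assert (E1 := mvi_real _ _ _ _ B Hab H1 ltac:(intros t Ht; specialize (Hc t); specialize (Hb t Ht); lra)).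
  assert (E2 := mvi_real _ _ _ _ B Hab H2 ltac:(intros t Ht; specialize (Hc t); specialize (Hb t Ht); lra)).
  assert (E3 := mvi_real _ _ _ _ B Hab H3 ltac:(intros t Ht; specialize (Hc t); specialize (Hb t Ht); lra)).
  assert (E4 := mvi_real _ _ _ _ B Hab H4 ltac:(intros t Ht; specialize (Hc t); specialize (Hb t Ht); lra)).
  eapply Rle_trans. apply vn_c.
  replace (vc1 (vsub (F be) (F al))) with (vc1 (F be) - vc1 (F al)) by (vdes; vunf; ring).
  replace (vc2 (vsub (F be) (F al))) with (vc2 (F be) - vc2 (F al)) by (vdes; vunf; ring).
  replace (vc3 (vsub (F be) (F al))) with (vc3 (F be) - vc3 (F al)) by (vdes; vunf; ring).
  replace (vc4 (vsub (F be) (F al))) with (vc4 (F be) - vc4 (F al)) by (vdes; vunf; ring).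
  lra.
Qed.

Lemma xd_restrict al be al' be' F G : xderiv al be F G -> al <= al' -> be' <= be ->
  xderiv al' be' F G.
Proof.
  intros H H1 H2 t Ht e He. destruct (H t ltac:(lra) e He) as [d [Hd Hd']].
  exists d; split; auto. intros; apply Hd'; auto; lra.
Qed.

Lemma vn_symm u v : vnorm (vsub u v) = vnorm (vsub v u).
Proof. apply vn_eq; vdes; vunf; ring. Qed.

Lemma mviV2 al be F G B x y : xderiv al be F G ->
  al <= x <= be -> al <= y <= be ->
  (forall t, Rmin x y <= t <= Rmax x y -> vnorm (G t) <= B) ->
  vnorm (vsub (F x) (F y)) <= 4 * B * Rabs (x - y).
Proof.
  intros Hd Hx Hy Hb.
  destruct (Rle_dec y x).
  - rewrite Rmin_right, Rmax_left in Hb by lra.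
    rewrite Rabs_right by lra. apply (mviV _ _ _ G); auto. eapply xd_restrict; eauto; lra.
  - rewrite Rmin_left, Rmax_right in Hb by lra.
    rewrite Rabs_left by lra. rewrite vn_symm. replace (- (x - y)) with (y - x) by ring.
    apply (mviV _ _ _ G); auto; try lra. eapply xd_restrict; eauto; lra.
Qed.

Lemma xd_sub al be F G F' G' : xderiv al be F G -> xderiv al be F' G' ->
  xderiv al be (fun s => vsub (F s) (F' s)) (fun s => vsub (G s) (G' s)).
Proof.
  intros H H' t Ht e He.
  destruct (H t Ht (e/2) ltac:(lra)) as [d [Hd Hd']].
  destruct (H' t Ht (e/2) ltac:(lra)) as [d' [Hd2 Hd2']].
  exists (Rmin d d'). split. apply Rmin_pos; auto.
  intros t' Ht' Htt.
  assert (Rabs (t' - t) < d) by (eapply Rlt_le_trans; [exact Htt|apply Rmin_l]).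
  assert (Rabs (t' - t) < d') by (eapply Rlt_le_trans; [exact Htt|apply Rmin_r]).
  specialize (Hd' t' Ht' H0). specialize (Hd2' t' Ht' H1).
  replace (vsub (vsub (vsub (F t') (F' t')) (vsub (F t) (F' t))) (vrscal (t' - t) (vsub (G t) (G' t))))
   with (vsub (vsub (vsub (F t') (F t)) (vrscal (t' - t) (G t))) (vsub (vsub (F' t') (F' t)) (vrscal (t' - t) (G' t)))) by veq.
  eapply Rle_trans. apply vn_sub. lra.
Qed.

Lemma xd_lin al be c v : xderiv al be (fun s => vrscal (s - c) v) (fun _ => v).
Proof.
  intros t Ht e He. exists 1. split. lra. intros t' Ht' Htt.
  replace (vsub (vsub (vrscal (t' - c) v) (vrscal (t - c) v)) (vrscal (t' - t) v)) with (vrscal 0 v) by veq.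
  rewrite vn_scal, Rabs_R0. pose proof (Rabs_pos (t'-t)). nra.
Qed.

Lemma xd_quad al be c v : xderiv al be (fun s => vrscal ((s - c)^2/2) v) (fun s => vrscal (s - c) v).
Proof.
  intros t Ht e He. exists (e / (vnorm v + 1)). split.
  { pose proof (vn_ge0 v). apply Rdiv_lt_0_compat; lra. }
  intros t' Ht' Htt.
  replace (vsub (vsub (vrscal ((t' - c)^2/2) v) (vrscal ((t - c)^2/2) v)) (vrscal (t' - t) (vrscal (t - c) v)))
    with (vrscal ((t' - t)^2/2) v) by veqf.
  rewrite vn_scal. pose proof (vn_ge0 v). pose proof (Rabs_pos (t'-t)).
  assert (Rabs (t' - t) * (vnorm v + 1) < e).
  { apply (Rmult_lt_compat_r (vnorm v + 1)) in Htt; [|lra].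
    replace (e / (vnorm v + 1) * (vnorm v + 1)) with e in Htt by (field; lra). lra. }
  assert (E: (t'-t)^2 = Rabs (t'-t) * Rabs (t'-t)) by (rewrite <- (pow2_abs (t'-t)); ring).
  rewrite E. rewrite Rabs_right by (apply Rle_ge; nra). nra.
Qed.

Lemma xd_ext al be F G G' : xderiv al be F G -> (forall s, al <= s <= be -> G s = G' s) ->
  xderiv al be F G'.
Proof.
  intros H E t Ht e He. destruct (H t Ht e He) as [d [Hd Hd']]. exists d; split; auto.
  intros. rewrite <- E by auto. auto.
Qed.

Lemma xd_extF al be F F' G : xderiv al be F G -> (forall s, al <= s <= be -> F s = F' s) ->
  xderiv al be F' G.
Proof.
  intros H E t Ht e He. destruct (H t Ht e He) as [d [Hd Hd']]. exists d; split; auto.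
  intros. rewrite <- !E by auto. auto.
Qed.

Definition vlip (al be : R) (G : R -> V2) (L : R) : Prop :=
  forall x y, al <= x <= be -> al <= y <= be -> vnorm (vsub (G x) (G y)) <= L * Rabs (x - y).

Lemma between_abs c x s : Rmin c x <= s <= Rmax c x -> Rabs (s - c) <= Rabs (x - c).
Proof. unfold Rmin, Rmax; intros; repeat destruct Rle_dec; unfold Rabs; repeat destruct Rcase_abs; lra. Qed.
Lemma between_in al be c x s : al <= c <= be -> al <= x <= be -> Rmin c x <= s <= Rmax c x -> al <= s <= be.
Proof. unfold Rmin, Rmax; intros; repeat destruct Rle_dec; lra. Qed.

Lemma tay2 al be F G L c x : 0 <= L -> xderiv al be F G -> vlip al be G L ->
  al <= c <= be -> al <= x <= be ->
  vnorm (vsub (vsub (F x) (F c)) (vrscal (x - c) (G c))) <= 4 * L * (x - c)^2.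
Proof.
  intros HL Hd Hl Hc Hx.
  pose proof (xd_sub _ _ _ _ _ _ Hd (xd_lin al be c (G c))) as Hp.
  pose proof (mviV2 _ _ _ _ (L * Rabs (x - c)) x c Hp Hx Hc) as M.
  replace (vsub (vsub (F x) (F c)) (vrscal (x - c) (G c))) with
    (vsub (vsub (F x) (vrscal (x - c) (G c))) (vsub (F c) (vrscal (c - c) (G c)))) by veq.
  eapply Rle_trans. apply M.
  - intros s Hs. rewrite (Rmin_comm x c), (Rmax_comm x c) in Hs.
    cbv beta. eapply Rle_trans. apply (Hl s c); [apply (between_in al be c x s Hc Hx Hs) | auto].
    apply Rmult_le_compat_l; auto; apply between_abs; auto.
  - rewrite <- (pow2_abs (x - c)). right; ring.
Qed.

Lemma tay3 al be F G G2 L c x : 0 <= L -> xderiv al be F G -> xderiv al be G G2 -> vlip al be G2 L ->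
  al <= c <= be -> al <= x <= be ->
  vnorm (vsub (vsub (vsub (F x) (F c)) (vrscal (x - c) (G c))) (vrscal ((x - c)^2/2) (G2 c)))
    <= 16 * L * Rabs (x - c)^3.
Proof.
  intros HL Hd Hd2 Hl Hc Hx.
  pose proof (xd_sub _ _ _ _ _ _ (xd_sub _ _ _ _ _ _ Hd (xd_lin al be c (G c))) (xd_quad al be c (G2 c))) as Hp.
  pose proof (mviV2 _ _ _ _ (4 * L * (x - c)^2) x c Hp Hx Hc) as M.
  replace (vsub (vsub (vsub (F x) (F c)) (vrscal (x - c) (G c))) (vrscal ((x - c)^2/2) (G2 c))) with
    (vsub (vsub (vsub (F x) (vrscal (x - c) (G c))) (vrscal ((x - c)^2/2) (G2 c)))
          (vsub (vsub (F c) (vrscal (c - c) (G c))) (vrscal ((c - c)^2/2) (G2 c)))) by veqf.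
  eapply Rle_trans. apply M.
  - intros s Hs. rewrite (Rmin_comm x c), (Rmax_comm x c) in Hs.
    cbv beta. pose proof (between_in al be c x s Hc Hx Hs) as Hs'.
    eapply Rle_trans. apply (tay2 al be G G2 L c s HL Hd2 Hl Hc Hs').
    pose proof (between_abs c x s Hs).
    rewrite <- (pow2_abs (s - c)), <- (pow2_abs (x - c)).
    pose proof (Rabs_pos (s - c)).
    apply Rmult_le_compat_l. lra. nra.
  - rewrite <- (pow2_abs (x - c)). right; ring.
Qed.

Lemma lip_of_der al be G G2 B : xderiv al be G G2 ->
  (forall t, al <= t <= be -> vnorm (G2 t) <= B) -> vlip al be G (4 * B).
Proof.
  intros Hd Hb x y Hx Hy. apply (mviV2 al be G G2); auto.
  intros t Ht. apply Hb. rewrite (Rmin_comm x y), (Rmax_comm x y) in Ht.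
  apply (between_in al be y x t Hy Hx Ht).
Qed.

End MP3.
Import MP3.

Module MP4.

Ltac vdes := repeat match goal with
  | v : V2 |- _ => let a:=fresh "a" in let b := fresh "b" in let c := fresh "c" in
      let d := fresh "d" in destruct v as [[a b] [c d]]
  | z : C |- _ => destruct z end.
Ltac vunf := cbv [free_op pot_op vsub vrscal vscal vadd sigma1 sigma3 Cplus Cmult Copp RtoC Ci ip vc1 vc2 vc3 vc4 vzero fst snd] in *.

Lemma gsum_ext f g M : (forall j, (j < M)%nat -> f j = g j) -> gsum f M = gsum g M.
Proof. induction M; simpl; intros; auto. rewrite IHM, H; auto. Qed.
Lemma gsum_le f g M : (forall j, (j < M)%nat -> f j <= g j) -> gsum f M <= gsum g M.
Proof. induction M; simpl; intros. lra. pose proof (H M ltac:(lia)). pose proof (IHM ltac:(intros; apply H; lia)). lra. Qed.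
Lemma gsum_plus f g M : gsum (fun j => f j + g j) M = gsum f M + gsum g M.
Proof. induction M; simpl; intros. lra. rewrite IHM. ring. Qed.
Lemma gsum_minus f g M : gsum (fun j => f j - g j) M = gsum f M - gsum g M.
Proof. induction M; simpl; intros. lra. rewrite IHM. ring. Qed.
Lemma gsum_scal c f M : gsum (fun j => c * f j) M = c * gsum f M.
Proof. induction M; simpl; intros. lra. rewrite IHM. ring. Qed.
Lemma gsum_const c M : gsum (fun _ => c) M = INR M * c.
Proof. induction M; simpl gsum; intros. simpl; lra. rewrite IHM, S_INR. ring. Qed.
Lemma gsum_ge0 f M : (forall j, (j < M)%nat -> 0 <= f j) -> 0 <= gsum f M.
Proof. induction M; simpl; intros. lra. pose proof (H M ltac:(lia)). pose proof (IHM ltac:(intros; apply H; lia)). lra. Qed.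
Lemma gsum_S f m : gsum f (S m) = gsum (fun j => f (S j)) m + f 0%nat.
Proof. induction m. simpl; ring. change (gsum f (S (S m))) with (gsum f (S m) + f (S m)). rewrite IHm. simpl. ring. Qed.

Lemma mod_next j M : (j < M)%nat -> ((j + 1) mod M = if Nat.eq_dec (j + 1) M then 0 else j + 1)%nat.
Proof.
  intros. destruct Nat.eq_dec.
  - rewrite e. apply Nat.Div0.mod_same.
  - apply Nat.mod_small. lia.
Qed.
Lemma mod_prev j M : (j < M)%nat -> ((j + M - 1) mod M = if Nat.eq_dec j 0 then M - 1 else j - 1)%nat.
Proof.
  intros. destruct Nat.eq_dec.
  - subst. apply Nat.mod_small. lia.
  - symmetry. apply (Nat.mod_unique _ _ 1). lia. lia.
Qed.
Lemma mod_lt j M : (0 < M)%nat -> (j mod M < M)%nat.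
Proof. intros; apply Nat.mod_upper_bound; lia. Qed.
Lemma mod_np j M : (j < M)%nat -> (((j + 1) mod M + M - 1) mod M = j)%nat.
Proof.
  intros. rewrite mod_next by auto. destruct Nat.eq_dec.
  - rewrite mod_prev by lia. destruct Nat.eq_dec; lia.
  - rewrite mod_prev by lia. destruct Nat.eq_dec; lia.
Qed.

Lemma gsum_shift F M : (1 <= M)%nat -> gsum (fun j => F ((j + 1) mod M)%nat) M = gsum F M.
Proof.
  intros. destruct M as [|m]. lia.
  change (gsum (fun j => F ((j + 1) mod S m)%nat) (S m)) with
     (gsum (fun j => F ((j + 1) mod S m)%nat) m + F ((m + 1) mod S m)%nat).
  rewrite gsum_S. f_equal.
  - apply gsum_ext. intros. rewrite Nat.mod_small by lia. f_equal; lia.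
  - rewrite mod_next by lia. destruct Nat.eq_dec; auto; lia.
Qed.

Lemma ip_am a b : 2 * ip a b <= ip a a + ip b b.
Proof.
  assert (0 <= ip (vsub a b) (vsub a b)) by apply ip_ge0.
  assert (ip (vsub a b) (vsub a b) = ip a a + ip b b - 2 * ip a b) by (vdes; vunf; ring). lra.
Qed.

Lemma pt_id tau h eps uj vj wp wm Y : tau <> 0 -> eps <> 0 -> h <> 0 ->
  vscal Ci (vrscal (/ (2 * tau)) (vsub uj vj)) =
    vadd (free_op eps (vrscal (/ (2 * h)) (vsub wp wm)) (vrscal (1 / 2) (vadd uj vj))) Y ->
  ip uj uj - ip vj vj = 4 * tau * (- (/ eps) * (/ (2 * h)) *
     (ip (sigma1 wp) (vrscal (1 / 2) (vadd uj vj)) - ip (sigma1 wm) (vrscal (1 / 2) (vadd uj vj)))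
     + ip Y (vscal Ci (vrscal (1 / 2) (vadd uj vj)))).
Proof.
  intros Ht He Hh H.
  apply (f_equal (fun z => ip z (vscal Ci (vrscal (1 / 2) (vadd uj vj))))) in H.
  match type of H with ?L = ?R =>
  assert (E: ip uj uj - ip vj vj - 4 * tau * (- (/ eps) * (/ (2 * h)) *
     (ip (sigma1 wp) (vrscal (1 / 2) (vadd uj vj)) - ip (sigma1 wm) (vrscal (1 / 2) (vadd uj vj)))
     + ip Y (vscal Ci (vrscal (1 / 2) (vadd uj vj)))) = 4 * tau * (L - R)) end.
  { vdes; vunf. field. auto. }
  rewrite H in E. lra.
Qed.

Lemma pt_bound Vv Av m e xi u v : Rabs Vv + Rabs Av <= m ->
  ip (vadd (pot_op Vv Av e) xi) (vscal Ci (vrscal (1 / 2) (vadd u v)))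
   <= m ^ 2 * ip e e + ip xi xi + (ip u u + ip v v) / 4.
Proof.
  intros Hm.
  pose proof (ip_am (vadd (pot_op Vv Av e) xi) (vscal Ci (vrscal (1 / 2) (vadd u v)))) as H1.
  assert (E1 : ip (vscal Ci (vrscal (1 / 2) (vadd u v))) (vscal Ci (vrscal (1 / 2) (vadd u v)))
     = (ip u u + ip v v + 2 * ip u v) / 4) by (vdes; vunf; field).
  pose proof (ip_am u v).
  pose proof (vn_add (pot_op Vv Av e) xi) as H2.
  pose proof (vn_pot Vv Av e) as H3.
  pose proof (vn_ge0 (pot_op Vv Av e)). pose proof (vn_ge0 xi). pose proof (vn_ge0 e).
  pose proof (vn_ge0 (vadd (pot_op Vv Av e) xi)).
  pose proof (Rabs_pos Vv). pose proof (Rabs_pos Av).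
  assert (HH4: vnorm (pot_op Vv Av e) <= m * vnorm e) by nra.
  assert (HH6: vnorm (vadd (pot_op Vv Av e) xi) <= m * vnorm e + vnorm xi) by lra.
  assert (HH7: vnorm (vadd (pot_op Vv Av e) xi) ^ 2 <= (m * vnorm e + vnorm xi) ^ 2)
    by (apply pow_incr; split; auto).
  assert (HH5: vnorm (vadd (pot_op Vv Av e) xi) ^ 2 <= 2 * (m * vnorm e)^2 + 2 * vnorm xi ^ 2)
    by (pose proof (pow2_ge_0 (m * vnorm e - vnorm xi)); nra).
  rewrite !vn_sq in HH5. rewrite Rpow_mult_distr, vn_sq in HH5. nra.
Qed.

Definition SS (M : nat) (f : nat -> V2) : R := gsum (fun j => ip (f j) (f j)) M.

Lemma SS_ge0 M f : 0 <= SS M f.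
Proof. apply gsum_ge0. intros; apply ip_ge0. Qed.

Lemma ip_s1 a b : ip (sigma1 a) b = ip (sigma1 b) a.
Proof. vdes; vunf; ring. Qed.

Lemma energy_step M h tau eps m (u e0 v xi : nat -> V2) (Vn An : nat -> R) :
  (1 <= M)%nat -> 0 < tau -> 0 < eps -> 0 < h ->
  (forall j, (j < M)%nat -> Rabs (Vn j) + Rabs (An j) <= m) ->
  (forall j, (j < M)%nat ->
     vscal Ci (vrscal (/ (2 * tau)) (vsub (u j) (v j))) =
     vadd (free_op eps (vrscal (/ (2 * h))
              (vsub (vrscal (1/2) (vadd (u ((j + 1) mod M)%nat) (v ((j + 1) mod M)%nat)))
                    (vrscal (1/2) (vadd (u ((j + M - 1) mod M)%nat) (v ((j + M - 1) mod M)%nat)))))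
             (vrscal (1/2) (vadd (u j) (v j))))
          (vadd (pot_op (Vn j) (An j) (e0 j)) (xi j))) ->
  SS M u - SS M v <= tau * (4 * m ^ 2 * SS M e0 + SS M u + SS M v) + 4 * tau * SS M xi.
Proof.
  intros HM Ht He Hh Hm Heq.
  set (w := fun k => vrscal (1/2) (vadd (u k) (v k))).
  set (A := fun j => ip (sigma1 (w ((j + 1) mod M)%nat)) (w j)).
  set (B := fun j => ip (sigma1 (w ((j + M - 1) mod M)%nat)) (w j)).
  set (I := fun j => ip (vadd (pot_op (Vn j) (An j) (e0 j)) (xi j)) (vscal Ci (w j))).
  assert (E1 : SS M u - SS M v = gsum (fun j => 4 * tau * (- (/ eps) * (/ (2 * h)) * (A j - B j) + I j)) M).
  { unfold SS. rewrite <- gsum_minus. apply gsum_ext. intros j Hj.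
    apply pt_id; try lra. apply Heq; auto. }
  assert (E2 : gsum A M = gsum B M).
  { unfold A, B. rewrite <- (gsum_shift (fun j => ip (sigma1 (w ((j + M - 1) mod M)%nat)) (w j)) M HM).
    apply gsum_ext. intros j Hj. rewrite mod_np by auto. apply ip_s1. }
  rewrite E1, gsum_scal.
  rewrite gsum_plus, gsum_scal, gsum_minus, E2.
  assert (E3 : gsum I M <= m ^ 2 * SS M e0 + SS M xi + (SS M u + SS M v) / 4).
  { unfold SS. rewrite <- gsum_scal, <- gsum_plus.
    replace ((gsum (fun j => ip (u j) (u j)) M + gsum (fun j => ip (v j) (v j)) M) / 4) with
      (gsum (fun j => / 4 * (ip (u j) (u j) + ip (v j) (v j))) M) by (rewrite gsum_scal, gsum_plus; field).
    rewrite <- gsum_plus. apply gsum_le. intros j Hj. unfold I, w.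
    pose proof (pt_bound (Vn j) (An j) m (e0 j) (xi j) (u j) (v j) (Hm j Hj)). lra. }
  nra.
Qed.

End MP4.
Import MP4.

Module MP5.

Lemma gron_step En Ep tau kap G : 0 < tau -> 0 <= kap -> tau * kap <= 1/2 -> 0 <= Ep ->
  En - Ep <= tau * kap * (En + Ep) + tau * G ->
  En <= (1 + 4 * tau * kap) * Ep + 2 * Rmax 0 (tau * G).
Proof.
  intros Ht Hk Hx HEp H.
  replace (1 + 4 * tau * kap) with (1 + 4 * (tau * kap)) by ring.
  set (x := tau * kap) in *.
  assert (x >= 0) by (unfold x; nra).
  pose proof (Rmax_l 0 (tau * G)). pose proof (Rmax_r 0 (tau * G)).
  assert (En * (1 - x) <= (1 + x) * Ep + tau * G) by nra.
  assert (0 <= 2 * x * (1 - 2 * x)) by nra.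
  assert ((1 + x) * Ep <= (1 + 4 * x) * (1 - x) * Ep) by nra.
  assert (tau * G <= 2 * Rmax 0 (tau * G) * (1 - x)) by nra.
  assert (HH: En * (1 - x) <= ((1 + 4 * x) * Ep + 2 * Rmax 0 (tau * G)) * (1 - x)) by nra.
  apply Rmult_le_reg_r in HH; lra.
Qed.

Lemma gronwall (E : nat -> R) tau kap G N : 0 < tau -> 0 <= kap -> tau * kap <= 1/2 -> 0 <= G ->
  (forall n, 0 <= E n) ->
  (forall n, (1 <= n <= N)%nat -> E n - E (n - 1)%nat <= tau * kap * (E n + E (n - 1)%nat) + tau * G) ->
  forall n, (n <= N)%nat -> E n <= exp (4 * kap * (INR n * tau)) * (E 0%nat + 2 * INR n * tau * G).
Proof.
  intros Ht Hk Hx HG HE Hs.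
  induction n; intros Hn.
  - simpl. rewrite Rmult_0_l, Rmult_0_r, exp_0. lra.
  - pose proof (Hs (S n) ltac:(lia)) as H0. replace (S n - 1)%nat with n in H0 by lia.
    pose proof (gron_step _ _ _ _ _ Ht Hk Hx (HE n) H0) as H.
    rewrite Rmax_right in H by nra.
    specialize (IHn ltac:(lia)).
    rewrite S_INR.
    replace (4 * kap * ((INR n + 1) * tau)) with (4 * kap * (INR n * tau) + 4 * tau * kap) by ring.
    rewrite exp_plus.
    pose proof (exp_ineq1_le (4 * tau * kap)).
    pose proof (exp_pos (4 * kap * (INR n * tau))).
    assert (0 <= 4 * kap * (INR n * tau)) by (pose proof (pos_INR n); apply Rmult_le_pos; [lra| apply Rmult_le_pos; lra]).
    assert (1 <= exp (4 * kap * (INR n * tau))) by (pose proof (exp_ineq1_le (4 * kap * (INR n * tau))); lra).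
    assert (1 <= exp (4 * tau * kap)) by nra.
    pose proof (pos_INR n). pose proof (HE 0%nat). pose proof (HE n).
    assert (0 <= E 0%nat + 2 * INR n * tau * G) by nra.
    set (X := exp (4 * kap * (INR n * tau))) in *.
    set (Y := exp (4 * tau * kap)) in *.
    assert ((1 + 4 * tau * kap) * E n <= Y * (X * (E 0%nat + 2 * INR n * tau * G))).
    { apply Rmult_le_compat; nra. }
    assert (1 <= X * Y) by nra. assert (0 <= tau * G) by nra.
    assert (2 * (tau * G) <= X * Y * (2 * tau * G)) by nra.
    replace (X * Y * (E 0%nat + 2 * (INR n + 1) * tau * G)) with
      (Y * (X * (E 0%nat + 2 * INR n * tau * G)) + X * Y * (2 * tau * G)) by ring.
    lra.
Qed.

End MP5.
Import MP5.

Module MP6.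

Ltac vdes := repeat match goal with
  | v : V2 |- _ => let a:=fresh "a" in let b := fresh "b" in let c := fresh "c" in
      let d := fresh "d" in destruct v as [[a b] [c d]]
  | z : C |- _ => destruct z end.
Ltac vunf := cbv [free_op pot_op vsub vrscal vscal vadd sigma1 sigma3 Cplus Cmult Copp RtoC Ci ip vc1 vc2 vc3 vc4 vzero fst snd] in *.
Ltac veq := vdes; vunf; apply pair_eq4; ring.
Ltac veqf := vdes; vunf; apply pair_eq4; field.

Lemma sin_lb_aux a : 0 <= a <= 1 -> a - a^2 <= sin_lb a.
Proof.
intros. unfold sin_lb, sin_approx, sin_term. simpl. field_simplify.
assert (0 <= a^3) by (apply pow_le; lra).
assert (0 <= a^5) by (apply pow_le; lra).
assert (a^7 <= a^3) by (replace (a^7) with (a^3*(a^2*a^2)) by ring; assert (a^2 <= 1) by nra; assert (a^2*a^2 <= 1) by nra; nra).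
assert (a^3 <= a^2) by (replace (a^3) with (a^2*a) by ring; nra).
apply Rmult_le_reg_r with 3628800. lra. unfold Rdiv. rewrite Rmult_assoc, Rinv_l by lra. lra. Qed.

Lemma sin_err x : 0 <= x -> Rabs (sin x - x) <= x^2.
Proof.
  intros. destruct (Req_dec x 0). subst. rewrite sin_0. replace (0-0) with 0 by ring. rewrite Rabs_R0. lra.
  pose proof (sin_lt_x x ltac:(lra)).
  rewrite Rabs_left by lra.
  destruct (Rle_dec x 1).
  - pose proof (SIN x H ltac:(pose proof PI2_1; lra)). pose proof (sin_lb_aux x ltac:(lra)). lra.
  - destruct (Rle_dec x PI).
    + pose proof (sin_ge_0 x H r). nra.
    + pose proof (SIN_bound x). pose proof PI2_1. nra.
Qed.

Lemma central fp fm f0 g0 g2 h B : 0 < h ->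
  vnorm (vsub (vsub (vsub fp f0) (vrscal h g0)) (vrscal (h^2/2) g2)) <= B ->
  vnorm (vsub (vsub (vsub fm f0) (vrscal (-h) g0)) (vrscal ((-h)^2/2) g2)) <= B ->
  vnorm (vsub (vrscal (/ (2 * h)) (vsub fp fm)) g0) <= B / h.
Proof.
  intros Hh H1 H2.
  replace (vsub (vrscal (/ (2 * h)) (vsub fp fm)) g0) with
    (vrscal (/ (2 * h)) (vsub (vsub (vsub (vsub fp f0) (vrscal h g0)) (vrscal (h^2/2) g2))
                              (vsub (vsub (vsub fm f0) (vrscal (-h) g0)) (vrscal ((-h)^2/2) g2)))) by (veqf; lra).
  rewrite vn_scal. rewrite Rabs_right by (apply Rle_ge; left; apply Rinv_0_lt_compat; lra).
  eapply Rle_trans. apply Rmult_le_compat_l. left; apply Rinv_0_lt_compat; lra. apply vn_sub.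
  apply Rle_trans with (/ (2 * h) * (B + B)).
  apply Rmult_le_compat_l. left; apply Rinv_0_lt_compat; lra. lra.
  right. field. lra.
Qed.

Lemma avg2 fp fm f0 g0 tau B :
  vnorm (vsub (vsub fp f0) (vrscal tau g0)) <= B ->
  vnorm (vsub (vsub fm f0) (vrscal (-tau) g0)) <= B ->
  vnorm (vsub (vrscal (1/2) (vadd fp fm)) f0) <= B.
Proof.
  intros H1 H2.
  replace (vsub (vrscal (1/2) (vadd fp fm)) f0) with
    (vrscal (1/2) (vadd (vsub (vsub fp f0) (vrscal tau g0)) (vsub (vsub fm f0) (vrscal (-tau) g0)))) by veqf.
  rewrite vn_scal. rewrite Rabs_right by lra.
  pose proof (vn_add (vsub (vsub fp f0) (vrscal tau g0)) (vsub (vsub fm f0) (vrscal (-tau) g0))). lra.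
Qed.

End MP6.
Import MP6.

Module MP7.

Ltac vdes := repeat match goal with
  | v : V2 |- _ => let a:=fresh "a" in let b := fresh "b" in let c := fresh "c" in
      let d := fresh "d" in destruct v as [[a b] [c d]]
  | z : C |- _ => destruct z end.
Ltac vunf := cbv [free_op pot_op vsub vrscal vscal vadd sigma1 sigma3 Cplus Cmult Copp RtoC Ci ip vc1 vc2 vc3 vc4 vzero fst snd] in *.
Ltac veq := vdes; vunf; apply pair_eq4; ring.
Ltac veqf := vdes; vunf; apply pair_eq4; field.

Definition Hbnd (a b T K eps : R) (Dq : nat -> nat -> R -> R -> V2) : Prop :=
  forall r t, (r <= 3)%nat -> 0 <= t <= T -> Wbnd (3 - r) a b (fun s => Dq r s t) (K / eps ^ r).

Section Facts.
Variables (a b T K eps : R) (Dq : nat -> nat -> R -> R -> V2).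
Hypothesis Hr : regA a b T Dq.
Hypothesis Hb : Hbnd a b T K eps Dq.

Lemma tder r x : (r <= 2)%nat -> a <= x <= b ->
  xderiv 0 T (fun t => Dq r 0%nat t x) (fun t => Dq (S r) 0%nat t x).
Proof.
  intros Hrr Hx t Ht e He. destruct Hr as [_ [_ [H3 _]]].
  destruct (H3 (S r) r ltac:(lia) ltac:(lia) t Ht e He) as [d [Hd H]].
  exists d. split; auto. intros t' Ht' Htt. destruct (H t' Ht' Htt) as [Hs _].
  apply (Hs 0%nat ltac:(lia) x Hx).
Qed.

Lemma supD r t x : (r <= 3)%nat -> 0 <= t <= T -> a <= x <= b -> vnorm (Dq r 0%nat t x) <= K / eps ^ r.
Proof. intros. destruct (Hb r t H H0) as [H2 _]. apply (H2 0%nat ltac:(lia) x H1). Qed.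

Lemma supD01 t x : 0 <= t <= T -> a <= x <= b -> vnorm (Dq 0%nat 1%nat t x) <= K.
Proof. intros. destruct (Hb 0%nat t ltac:(lia) H) as [H2 _]. pose proof (H2 1%nat ltac:(simpl; lia) x H0).
  simpl in H1. rewrite Rdiv_1_r in H1. auto. Qed.

Lemma lipD02 t : 0 <= t <= T -> vlip a b (Dq 0%nat 2%nat t) K.
Proof. intros. destruct (Hb 0%nat t ltac:(lia) H) as [_ H2]. pose proof (H2 ltac:(simpl; lia)) as H3.
  simpl in H3. rewrite Rdiv_1_r in H3. exact H3. Qed.

Lemma lipD20 t : 0 <= t <= T -> vlip a b (Dq 2%nat 0%nat t) (K / eps ^ 2).
Proof. intros. destruct (Hb 2%nat t ltac:(lia) H) as [_ H2]. pose proof (H2 ltac:(simpl; lia)) as H3.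
  simpl in H3. exact H3. Qed.

Lemma xD0 t : 0 <= t <= T -> xderiv a b (Dq 0%nat 0%nat t) (Dq 0%nat 1%nat t).
Proof. intros. destruct Hr as [H1 _]. apply H1; auto. Qed.
Lemma xD1 t : 0 <= t <= T -> xderiv a b (Dq 0%nat 1%nat t) (Dq 0%nat 2%nat t).
Proof. intros. destruct Hr as [H1 _]. apply H1; auto. Qed.
Lemma perD r s t : (r + s <= 2)%nat -> 0 <= t <= T -> Dq r s t a = Dq r s t b.
Proof. intros. destruct Hr as [_ [H1 _]]. apply H1; auto. Qed.

Hypothesis HK : 0 <= K.
Hypothesis He : 0 < eps.

Lemma Kpos r : 0 <= K / eps ^ r.
Proof. apply Rdiv_le_0_compat; auto. apply pow_lt; auto. Qed.

Lemma T1 t tau x : 0 < tau -> 0 <= t - tau -> t + tau <= T -> a <= x <= b ->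
  vnorm (vsub (vrscal (/ (2 * tau)) (vsub (Dq 0%nat 0%nat (t + tau) x) (Dq 0%nat 0%nat (t - tau) x)))
              (Dq 1%nat 0%nat t x)) <= 64 * (K / eps ^ 3) * tau ^ 2.
Proof.
  intros Ht H0 H1 Hx.
  assert (HL: vlip 0 T (fun s => Dq 2%nat 0%nat s x) (4 * (K / eps ^ 3))).
  { apply lip_of_der with (G2 := fun s => Dq 3%nat 0%nat s x). apply tder; auto.
    intros; apply supD; auto. }
  assert (0 <= 4 * (K / eps ^ 3)) by (pose proof (Kpos 3); lra).
  pose proof (tay3 0 T _ _ _ _ t (t + tau) H (tder 0 x ltac:(lia) Hx) (tder 1 x ltac:(lia) Hx) HL
               ltac:(lra) ltac:(lra)) as A1.
  pose proof (tay3 0 T _ _ _ _ t (t - tau) H (tder 0 x ltac:(lia) Hx) (tder 1 x ltac:(lia) Hx) HL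
               ltac:(lra) ltac:(lra)) as A2.
  cbv beta in A1, A2.
  replace (t + tau - t) with tau in A1 by ring. replace (t - tau - t) with (- tau) in A2 by ring.
  rewrite Rabs_right in A1 by lra. rewrite Rabs_left in A2 by lra. rewrite Ropp_involutive in A2.
  pose proof (central _ _ _ _ _ tau _ Ht A1 A2). eapply Rle_trans. apply H2.
  right. field. lra.
Qed.

Lemma T2 t tau x : 0 < tau -> 0 <= t - tau -> t + tau <= T -> a <= x <= b ->
  vnorm (vsub (vrscal (1/2) (vadd (Dq 0%nat 0%nat (t + tau) x) (Dq 0%nat 0%nat (t - tau) x)))
              (Dq 0%nat 0%nat t x)) <= 16 * (K / eps ^ 2) * tau ^ 2.
Proof.
  intros Ht H0 H1 Hx.
  assert (HL: vlip 0 T (fun s => Dq 1%nat 0%nat s x) (4 * (K / eps ^ 2))).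
  { apply lip_of_der with (G2 := fun s => Dq 2%nat 0%nat s x). apply tder; auto.
    intros; apply supD; auto. }
  assert (0 <= 4 * (K / eps ^ 2)) by (pose proof (Kpos 2); lra).
  pose proof (tay2 0 T _ _ _ t (t + tau) H (tder 0 x ltac:(lia) Hx) HL ltac:(lra) ltac:(lra)) as A1.
  pose proof (tay2 0 T _ _ _ t (t - tau) H (tder 0 x ltac:(lia) Hx) HL ltac:(lra) ltac:(lra)) as A2.
  cbv beta in A1, A2.
  replace (t + tau - t) with tau in A1 by ring. replace (t - tau - t) with (- tau) in A2 by ring.
  replace (4 * (4 * (K / eps ^ 2)) * (- tau) ^ 2) with (16 * (K / eps ^ 2) * tau ^ 2) in A2 by ring.
  replace (4 * (4 * (K / eps ^ 2)) * tau ^ 2) with (16 * (K / eps ^ 2) * tau ^ 2) in A1 by ring.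
  apply (avg2 _ _ _ _ _ _ A1 A2).
Qed.

Definition qf t tau z := vsub (vrscal (1/2) (vadd (Dq 0%nat 0%nat (t + tau) z) (Dq 0%nat 0%nat (t - tau) z)))
              (Dq 0%nat 0%nat t z).

Lemma Tq t tau x y : 0 < tau -> 0 <= t - tau -> t + tau <= T -> a <= x <= b -> a <= y <= b ->
  vnorm (vsub (qf t tau y) (qf t tau x)) <= 16 * (K / eps ^ 2) * Rabs (y - x) * tau ^ 2.
Proof.
  intros Ht H0 H1 Hx Hy.
  set (B := K / eps ^ 2 * Rabs (y - x)).
  assert (HB: 0 <= B) by (unfold B; pose proof (Kpos 2); pose proof (Rabs_pos (y - x)); nra).
  pose proof (xd_sub _ _ _ _ _ _ (tder 0 y ltac:(lia) Hy) (tder 0 x ltac:(lia) Hx)) as D0.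
  pose proof (xd_sub _ _ _ _ _ _ (tder 1 y ltac:(lia) Hy) (tder 1 x ltac:(lia) Hx)) as D1.
  assert (HL: vlip 0 T (fun s => vsub (Dq 1%nat 0%nat s y) (Dq 1%nat 0%nat s x)) (4 * B)).
  { apply lip_of_der with (G2 := fun s => vsub (Dq 2%nat 0%nat s y) (Dq 2%nat 0%nat s x)). auto.
    intros s Hs. apply (lipD20 s Hs y x Hy Hx). }
  assert (0 <= 4 * B) by lra.
  pose proof (tay2 0 T _ _ _ t (t + tau) H D0 HL ltac:(lra) ltac:(lra)) as A1.
  pose proof (tay2 0 T _ _ _ t (t - tau) H D0 HL ltac:(lra) ltac:(lra)) as A2.
  cbv beta in A1, A2.
  replace (t + tau - t) with tau in A1 by ring. replace (t - tau - t) with (- tau) in A2 by ring.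
  replace (4 * (4 * B) * (- tau) ^ 2) with (16 * (K / eps ^ 2) * Rabs (y - x) * tau ^ 2) in A2 by (unfold B; ring).
  replace (4 * (4 * B) * tau ^ 2) with (16 * (K / eps ^ 2) * Rabs (y - x) * tau ^ 2) in A1 by (unfold B; ring).
  pose proof (avg2 _ _ _ _ _ _ A1 A2) as A.
  replace (vsub (qf t tau y) (qf t tau x)) with
    (vsub (vrscal (1 / 2) (vadd (vsub (Dq 0%nat 0%nat (t + tau) y) (Dq 0%nat 0%nat (t + tau) x))
       (vsub (Dq 0%nat 0%nat (t - tau) y) (Dq 0%nat 0%nat (t - tau) x))))
       (vsub (Dq 0%nat 0%nat t y) (Dq 0%nat 0%nat t x))) by (unfold qf; veqf).
  exact A.
Qed.

End Facts.

End MP7.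
Import MP7.

Module MP8.

Ltac vdes := repeat match goal with
  | v : V2 |- _ => let a:=fresh "a" in let b := fresh "b" in let c := fresh "c" in
      let d := fresh "d" in destruct v as [[a b] [c d]]
  | z : C |- _ => destruct z end.
Ltac vunf := cbv [free_op pot_op vsub vrscal vscal vadd sigma1 sigma3 Cplus Cmult Copp RtoC Ci ip vc1 vc2 vc3 vc4 vzero fst snd] in *.
Ltac veq := vdes; vunf; apply pair_eq4; ring.
Ltac veqf := vdes; vunf; apply pair_eq4; field.

Section Grid.
Variables (a b : R) (M : nat).
Hypothesis Hab : a < b.
Hypothesis HM : (1 <= M)%nat.

Lemma INRM_pos : 0 < INR M.
Proof. apply lt_0_INR; lia. Qed.

Lemma h_pos : 0 < meshh a b M.
Proof. unfold meshh. apply Rdiv_lt_0_compat. lra. apply INRM_pos. Qed.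

Lemma Mh : INR M * meshh a b M = b - a.
Proof. unfold meshh. field. pose proof INRM_pos; lra. Qed.

Lemma h_le : meshh a b M <= b - a.
Proof. rewrite <- Mh. pose proof h_pos. assert (1 <= INR M) by (apply (le_INR 1); lia). nra. Qed.

Lemma grid_in j : (j < M)%nat -> a <= gridx a b M j /\ gridx a b M j + meshh a b M <= b.
Proof.
  intros. unfold gridx. pose proof h_pos. pose proof Mh. pose proof (pos_INR j).
  assert (INR j + 1 <= INR M) by (rewrite <- S_INR; apply le_INR; lia). split; nra.
Qed.

Lemma grid0 : gridx a b M 0 = a.
Proof. unfold gridx. simpl. ring. Qed.

Lemma grid_next (f : R -> V2) j : (j < M)%nat -> f a = f b ->
  f (gridx a b M ((j + 1) mod M)) = f (gridx a b M j + meshh a b M).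
Proof.
  intros Hj Hf. rewrite mod_next by auto. destruct Nat.eq_dec.
  - rewrite grid0, Hf. f_equal. unfold gridx. pose proof Mh.
    assert (E: INR M = INR j + 1) by (rewrite <- e, plus_INR; simpl; ring). rewrite E in H. lra.
  - f_equal. unfold gridx. rewrite plus_INR. simpl. ring.
Qed.

Lemma grid_prev j : (j < M)%nat ->
  gridx a b M ((j + M - 1) mod M) = if Nat.eq_dec j 0 then b - meshh a b M else gridx a b M j - meshh a b M.
Proof.
  intros Hj. rewrite mod_prev by auto. destruct Nat.eq_dec.
  - unfold gridx. rewrite minus_INR by lia. pose proof Mh. simpl. lra.
  - unfold gridx. rewrite minus_INR by lia. simpl. ring.
Qed.

Lemma grid_central F G G2 L j : (j < M)%nat -> 0 <= L ->
  xderiv a b F G -> xderiv a b G G2 -> vlip a b G2 L -> F a = F b -> G a = G b -> G2 a = G2 b ->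
  vnorm (vsub (vrscal (/ (2 * meshh a b M)) (vsub (F (gridx a b M ((j + 1) mod M)%nat))
                                                 (F (gridx a b M ((j + M - 1) mod M)%nat))))
              (G (gridx a b M j))) <= 16 * L * meshh a b M ^ 2.
Proof.
  intros Hj HL Hd1 Hd2 Hl HF HG HG2.
  set (h := meshh a b M) in *. pose proof h_pos as Hh. pose proof h_le as Hhl. fold h in Hh, Hhl.
  pose proof (grid_in j Hj) as [Hg1 Hg2]. fold h in Hg2.
  rewrite (grid_next F j Hj HF). rewrite (grid_prev j Hj). fold h.
  replace (16 * L * h ^ 2) with (16 * L * h ^ 3 / h) by (field; lra).
  destruct Nat.eq_dec as [E|E].
  - subst j. rewrite grid0 in *.
    pose proof (tay3 a b F G G2 L a (a + h) HL Hd1 Hd2 Hl ltac:(lra) ltac:(lra)) as A1.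
    pose proof (tay3 a b F G G2 L b (b - h) HL Hd1 Hd2 Hl ltac:(lra) ltac:(lra)) as A2.
    replace (a + h - a) with h in A1 by ring. replace (b - h - b) with (- h) in A2 by ring.
    rewrite Rabs_right in A1 by lra. rewrite Rabs_left in A2 by lra. rewrite Ropp_involutive in A2.
    rewrite <- HF, <- HG, <- HG2 in A2.
    apply (central _ _ _ _ _ h _ Hh A1 A2).
  - assert (Hj1: a <= gridx a b M j - h).
    { unfold h. replace (gridx a b M j - meshh a b M) with (gridx a b M (j - 1)) by
        (unfold gridx; rewrite minus_INR by lia; simpl; ring).
      apply grid_in; lia. }
    set (xj := gridx a b M j) in *.
    pose proof (tay3 a b F G G2 L xj (xj + h) HL Hd1 Hd2 Hl ltac:(lra) ltac:(lra)) as A1.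
    pose proof (tay3 a b F G G2 L xj (xj - h) HL Hd1 Hd2 Hl ltac:(lra) ltac:(lra)) as A2.
    replace (xj + h - xj) with h in A1 by ring. replace (xj - h - xj) with (- h) in A2 by ring.
    rewrite Rabs_right in A1 by lra. rewrite Rabs_left in A2 by lra. rewrite Ropp_involutive in A2.
    apply (central _ _ _ _ _ h _ Hh A1 A2).
Qed.

Lemma grid_lipdiff (q : R -> V2) Cq j : (j < M)%nat -> 0 <= Cq -> q a = q b ->
  (forall x y, a <= x <= b -> a <= y <= b -> vnorm (vsub (q y) (q x)) <= Cq * Rabs (y - x)) ->
  vnorm (vrscal (/ (2 * meshh a b M)) (vsub (q (gridx a b M ((j + 1) mod M)%nat))
                                                 (q (gridx a b M ((j + M - 1) mod M)%nat)))) <= Cq.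
Proof.
  intros Hj HC Hq Hl.
  set (h := meshh a b M) in *. pose proof h_pos as Hh. pose proof h_le as Hhl. fold h in Hh, Hhl.
  pose proof (grid_in j Hj) as [Hg1 Hg2]. fold h in Hg2.
  rewrite (grid_next q j Hj Hq). rewrite (grid_prev j Hj). fold h.
  rewrite vn_scal, Rabs_right by (apply Rle_ge; left; apply Rinv_0_lt_compat; lra).
  apply Rle_trans with (/ (2 * h) * (Cq * (2 * h))); [| right; field; lra].
  apply Rmult_le_compat_l. left; apply Rinv_0_lt_compat; lra.
  destruct Nat.eq_dec as [E|E].
  - subst j. rewrite grid0 in *.
    replace (vsub (q (a + h)) (q (b - h))) with (vadd (vsub (q (a + h)) (q a)) (vsub (q b) (q (b - h))))
      by (rewrite Hq; veq).
    eapply Rle_trans. apply vn_add.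
    pose proof (Hl a (a + h) ltac:(lra) ltac:(lra)). pose proof (Hl (b - h) b ltac:(lra) ltac:(lra)).
    replace (a + h - a) with h in H by ring. replace (b - (b - h)) with h in H0 by ring.
    rewrite Rabs_right in H, H0 by lra. lra.
  - assert (Hj1: a <= gridx a b M j - h).
    { unfold h. replace (gridx a b M j - meshh a b M) with (gridx a b M (j - 1)) by
        (unfold gridx; rewrite minus_INR by lia; simpl; ring).
      apply grid_in; lia. }
    set (xj := gridx a b M j) in *.
    pose proof (Hl (xj - h) (xj + h) ltac:(lra) ltac:(lra)).
    replace (xj + h - (xj - h)) with (2 * h) in H by ring. rewrite Rabs_right in H by lra. lra.
Qed.

End Grid.

End MP8.
Import MP8.

Module MP9.

Ltac vdes := repeat match goal with
  | v : V2 |- _ => let a:=fresh "a" in let b := fresh "b" in let c := fresh "c" in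
      let d := fresh "d" in destruct v as [[a b] [c d]]
  | z : C |- _ => destruct z end.
Ltac vunf := cbv [free_op pot_op vsub vrscal vscal vadd sigma1 sigma3 Cplus Cmult Copp RtoC Ci ip vc1 vc2 vc3 vc4 vzero fst snd] in *.
Ltac veq := vdes; vunf; apply pair_eq4; ring.
Ltac veqf := vdes; vunf; apply pair_eq4; field.

Definition Res eps d10 d01 d00 Vv Av :=
  vsub (vscal Ci d10) (vadd (free_op eps d01 d00) (pot_op Vv Av d00)).

Lemma vsub_zero X Y : vsub X Y = vzero -> X = Y.
Proof. intros H. vdes; vunf. injection H; intros. apply pair_eq4; lra. Qed.
Lemma vsub_zero' X Y : X = Y -> vsub X Y = vzero.
Proof. intros; subst. veq. Qed.

Lemma dirac_Res eps Vv Av ut ux u : dirac_eq eps Vv Av ut ux u <-> Res eps ut ux u Vv Av = vzero.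
Proof. unfold dirac_eq, Res. split; [apply vsub_zero'|apply vsub_zero]. Qed.

Lemma res_bound eps d10 d01 d00 Vv Av d10' d01' d00' Vv' Av' : 0 < eps ->
  vnorm (vsub (Res eps d10' d01' d00' Vv' Av') (Res eps d10 d01 d00 Vv Av)) <=
   vnorm (vsub d10' d10) + / eps * (vnorm (vsub d01' d01) + vnorm (vsub d00' d00))
   + Rabs (Vv' - Vv) * vnorm d00' + Rabs Vv * vnorm (vsub d00' d00)
   + Rabs (Av' - Av) * vnorm d00' + Rabs Av * vnorm (vsub d00' d00).
Proof.
  intros He.
  replace (vsub (Res eps d10' d01' d00' Vv' Av') (Res eps d10 d01 d00 Vv Av)) with
    (vsub (vsub (vscal Ci (vsub d10' d10)) (free_op eps (vsub d01' d01) (vsub d00' d00)))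
       (vadd (vadd (vrscal (Vv' - Vv) d00') (vrscal Vv (vsub d00' d00)))
             (vrscal (-1) (vadd (vrscal (Av' - Av) (sigma1 d00')) (vrscal Av (sigma1 (vsub d00' d00)))))))
    by (unfold Res; veq).
  eapply Rle_trans. apply vn_sub.
  pose proof (vn_sub (vscal Ci (vsub d10' d10)) (free_op eps (vsub d01' d01) (vsub d00' d00))).
  rewrite vn_i in H. pose proof (vn_free eps (vsub d01' d01) (vsub d00' d00) He).
  pose proof (vn_add (vadd (vrscal (Vv' - Vv) d00') (vrscal Vv (vsub d00' d00)))
     (vrscal (-1) (vadd (vrscal (Av' - Av) (sigma1 d00')) (vrscal Av (sigma1 (vsub d00' d00)))))).
  pose proof (vn_add (vrscal (Vv' - Vv) d00') (vrscal Vv (vsub d00' d00))).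
  rewrite !vn_scal in H2. rewrite vn_scal in H1.
  replace (Rabs (-1)) with 1 in H1 by (unfold Rabs; destruct Rcase_abs; lra).
  pose proof (vn_add (vrscal (Av' - Av) (sigma1 d00')) (vrscal Av (sigma1 (vsub d00' d00)))).
  rewrite !vn_scal, !vn_s1 in H3.
  lra.
Qed.

Lemma res_limit eps K d10 d01 d00 Vv Av : 0 < eps -> 0 <= K ->
  (forall eta, 0 < eta -> exists d10' d01' d00' Vv' Av',
     Res eps d10' d01' d00' Vv' Av' = vzero /\ vnorm d00' <= K /\
     vnorm (vsub d10' d10) <= eta /\ vnorm (vsub d01' d01) <= eta /\ vnorm (vsub d00' d00) <= eta /\
     Rabs (Vv' - Vv) <= eta /\ Rabs (Av' - Av) <= eta) ->
  Res eps d10 d01 d00 Vv Av = vzero.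
Proof.
  intros He HK H. apply vn_zero_iff.
  set (Cst := 1 + 2 / eps + 2 * K + Rabs Vv + Rabs Av).
  assert (HC: 0 < Cst) by (unfold Cst; pose proof (Rabs_pos Vv); pose proof (Rabs_pos Av);
     assert (0 < 2 / eps) by (apply Rdiv_lt_0_compat; lra); lra).
  assert (forall e, 0 < e -> vnorm (Res eps d10 d01 d00 Vv Av) <= e).
  { intros e He'. destruct (H (e / Cst) ltac:(apply Rdiv_lt_0_compat; lra)) as
      [d10' [d01' [d00' [Vv' [Av' [H0 [H1 [H2 [H3 [H4 [H5 H6]]]]]]]]]]].
    pose proof (res_bound eps d10 d01 d00 Vv Av d10' d01' d00' Vv' Av' He) as B.
    rewrite H0 in B.
    replace (vsub vzero (Res eps d10 d01 d00 Vv Av)) with (vrscal (-1) (Res eps d10 d01 d00 Vv Av)) in B by veq.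
    rewrite vn_scal in B. replace (Rabs (-1)) with 1 in B by (unfold Rabs; destruct Rcase_abs; lra).
    set (eta := e / Cst) in *.
    assert (Heta : eta * Cst = e) by (unfold eta; field; lra).
    assert (0 < eta) by (unfold eta; apply Rdiv_lt_0_compat; lra).
    pose proof (vn_ge0 d00'). pose proof (Rabs_pos Vv). pose proof (Rabs_pos Av).
    pose proof (Rabs_pos (Vv' - Vv)). pose proof (Rabs_pos (Av' - Av)).
    pose proof (vn_ge0 (vsub d00' d00)).
    assert (/ eps * (vnorm (vsub d01' d01) + vnorm (vsub d00' d00)) <= 2 / eps * eta).
    { unfold Rdiv. rewrite (Rmult_comm 2). rewrite Rmult_assoc. apply Rmult_le_compat_l.
      left; apply Rinv_0_lt_compat; lra. lra. }
    assert (Rabs (Vv' - Vv) * vnorm d00' <= eta * K) by (apply Rmult_le_compat; lra).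
    assert (Rabs (Av' - Av) * vnorm d00' <= eta * K) by (apply Rmult_le_compat; lra).
    assert (Rabs Vv * vnorm (vsub d00' d00) <= Rabs Vv * eta) by (apply Rmult_le_compat_l; lra).
    assert (Rabs Av * vnorm (vsub d00' d00) <= Rabs Av * eta) by (apply Rmult_le_compat_l; lra).
    rewrite <- Heta. unfold Cst. nra. }
  pose proof (vn_ge0 (Res eps d10 d01 d00 Vv Av)).
  destruct (Req_dec (vnorm (Res eps d10 d01 d00 Vv Av)) 0); auto.
  specialize (H0 (vnorm (Res eps d10 d01 d00 Vv Av) / 2) ltac:(lra)). lra.
Qed.

Lemma xd_cont al be F G x0 : xderiv al be F G -> al <= x0 <= be ->
  forall e, 0 < e -> exists d, 0 < d /\ forall y, al <= y <= be -> Rabs (y - x0) < d -> vnorm (vsub (F y) (F x0)) <= e.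
Proof.
  intros H Hx e He. destruct (H x0 Hx 1 ltac:(lra)) as [d [Hd H1]].
  pose proof (vn_ge0 (G x0)).
  exists (Rmin d (e / (vnorm (G x0) + 1))). split.
  { apply Rmin_pos; auto. apply Rdiv_lt_0_compat; lra. }
  intros y Hy Hyd.
  assert (Ha: Rabs (y - x0) < d) by (eapply Rlt_le_trans; [exact Hyd| apply Rmin_l]).
  assert (Hb: Rabs (y - x0) < e / (vnorm (G x0) + 1)) by (eapply Rlt_le_trans; [exact Hyd| apply Rmin_r]).
  specialize (H1 y Hy Ha).
  replace (vsub (F y) (F x0)) with (vadd (vsub (vsub (F y) (F x0)) (vrscal (y - x0) (G x0))) (vrscal (y - x0) (G x0))) by veq.
  eapply Rle_trans. apply vn_add. rewrite vn_scal.
  assert (Rabs (y - x0) * (vnorm (G x0) + 1) <= e).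
  { apply (Rmult_lt_compat_r (vnorm (G x0) + 1)) in Hb; [|lra].
    replace (e / (vnorm (G x0) + 1) * (vnorm (G x0) + 1)) with e in Hb by (field; lra). lra. }
  pose proof (Rabs_pos (y - x0)). nra.
Qed.

Lemma interior_near a b x0 d : a < b -> a <= x0 <= b -> 0 < d -> exists x, a < x < b /\ Rabs (x - x0) < d.
Proof.
  intros. set (s := Rmin (d / 2) ((b - a) / 4)).
  assert (0 < s) by (apply Rmin_pos; lra). assert (s <= d / 2) by apply Rmin_l. assert (s <= (b - a) / 4) by apply Rmin_r.
  clearbody s. destruct (Rlt_le_dec x0 ((a + b) / 2)).
  - exists (x0 + s). split. split; lra. replace (x0 + s - x0) with s by ring. rewrite Rabs_right; lra.
  - exists (x0 - s). split. split; lra. replace (x0 - s - x0) with (- s) by ring. rewrite Rabs_left; lra.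
Qed.

End MP9.
Import MP9.

Module MP10.

Section Ext.
Variables (a b T K eps : R) (Dq : nat -> nat -> R -> R -> V2) (V A : R -> R -> R).
Hypothesis Hab : a < b.
Hypothesis HT : 0 < T.
Hypothesis He : 0 < eps.
Hypothesis HK : 0 <= K.
Hypothesis Hr : regA a b T Dq.
Hypothesis Hb : Hbnd a b T K eps Dq.
Hypothesis HV : cont_rect T a b V.
Hypothesis HA : cont_rect T a b A.
Hypothesis HP : forall t x, 0 < t <= T -> a < x < b ->
     dirac_eq eps (V t x) (A t x) (Dq 1%nat 0%nat t x) (Dq 0%nat 1%nat t x) (Dq 0%nat 0%nat t x).

Lemma supD0 t x : 0 <= t <= T -> a <= x <= b -> vnorm (Dq 0%nat 0%nat t x) <= K.
Proof. intros. pose proof (supD a b T K eps Dq Hb 0 t x ltac:(lia) H H0) as H1. simpl in H1. rewrite Rdiv_1_r in H1. auto. Qed.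

Lemma ext_x t x : 0 < t <= T -> a <= x <= b ->
  Res eps (Dq 1%nat 0%nat t x) (Dq 0%nat 1%nat t x) (Dq 0%nat 0%nat t x) (V t x) (A t x) = vzero.
Proof.
  intros Ht Hx. apply (res_limit eps K); auto.
  intros eta Heta.
  assert (Ht' : 0 <= t <= T) by lra.
  assert (X10 : xderiv a b (Dq 1%nat 0%nat t) (Dq 1%nat 1%nat t)) by (destruct Hr as [Hq _]; apply Hq; auto).
  destruct (xd_cont _ _ _ _ x X10 Hx eta Heta) as [d1 [Hd1 H1]].
  assert (X01 : xderiv a b (Dq 0%nat 1%nat t) (Dq 0%nat 2%nat t)) by (destruct Hr as [Hq _]; apply Hq; auto).
  assert (X00 : xderiv a b (Dq 0%nat 0%nat t) (Dq 0%nat 1%nat t)) by (destruct Hr as [Hq _]; apply Hq; auto).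
  destruct (xd_cont _ _ _ _ x X01 Hx eta Heta) as [d2 [Hd2 H2]].
  destruct (xd_cont _ _ _ _ x X00 Hx eta Heta) as [d3 [Hd3 H3]].
  destruct (HV t x Ht' Hx eta Heta) as [d4 [Hd4 H4]].
  destruct (HA t x Ht' Hx eta Heta) as [d5 [Hd5 H5]].
  set (d := Rmin d1 (Rmin d2 (Rmin d3 (Rmin d4 d5)))).
  assert (Hd : 0 < d) by (unfold d; repeat apply Rmin_pos; auto).
  assert (d <= d1) by (unfold d; apply Rmin_l).
  assert (d <= d2) by (unfold d; eapply Rle_trans; [apply Rmin_r|apply Rmin_l]).
  assert (d <= d3) by (unfold d; eapply Rle_trans; [apply Rmin_r|]; eapply Rle_trans; [apply Rmin_r|apply Rmin_l]).
  assert (d <= d4) by (unfold d; eapply Rle_trans; [apply Rmin_r|]; eapply Rle_trans; [apply Rmin_r|];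
     eapply Rle_trans; [apply Rmin_r|apply Rmin_l]).
  assert (d <= d5) by (unfold d; eapply Rle_trans; [apply Rmin_r|]; eapply Rle_trans; [apply Rmin_r|];
     eapply Rle_trans; [apply Rmin_r|apply Rmin_r]).
  destruct (interior_near a b x d Hab Hx Hd) as [x' [Hx' Hxx]].
  assert (Hx'' : a <= x' <= b) by lra.
  exists (Dq 1%nat 0%nat t x'), (Dq 0%nat 1%nat t x'), (Dq 0%nat 0%nat t x'), (V t x'), (A t x').
  split. apply dirac_Res. apply HP; auto.
  split. apply supD0; auto.
  assert (Rabs (t - t) < d4) by (replace (t - t) with 0 by ring; rewrite Rabs_R0; lra).
  assert (Rabs (t - t) < d5) by (replace (t - t) with 0 by ring; rewrite Rabs_R0; lra).
  repeat split.
  - apply H1; auto; lra.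
  - apply H2; auto; lra.
  - apply H3; auto; lra.
  - left; apply H4; auto; lra.
  - left; apply H5; auto; lra.
Qed.

Lemma ext_t x : a <= x <= b ->
  Res eps (Dq 1%nat 0%nat 0 x) (Dq 0%nat 1%nat 0 x) (Dq 0%nat 0%nat 0 x) (V 0 x) (A 0 x) = vzero.
Proof.
  intros Hx. apply (res_limit eps K); auto.
  intros eta Heta.
  assert (H0T : 0 <= 0 <= T) by lra.
  destruct Hr as [_ [_ [_ H4c]]].
  destruct (H4c 1%nat 1%nat ltac:(lia) ltac:(lia) 0 H0T eta Heta) as [d1 [Hd1 H1]].
  destruct (H4c 0%nat 0%nat ltac:(lia) ltac:(lia) 0 H0T eta Heta) as [d2 [Hd2 H2]].
  destruct (HV 0 x H0T Hx eta Heta) as [d4 [Hd4 H4]].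
  destruct (HA 0 x H0T Hx eta Heta) as [d5 [Hd5 H5]].
  set (d := Rmin d1 (Rmin d2 (Rmin d4 d5))).
  assert (Hd : 0 < d) by (unfold d; repeat apply Rmin_pos; auto).
  assert (d <= d1) by (unfold d; apply Rmin_l).
  assert (d <= d2) by (unfold d; eapply Rle_trans; [apply Rmin_r|apply Rmin_l]).
  assert (d <= d4) by (unfold d; eapply Rle_trans; [apply Rmin_r|]; eapply Rle_trans; [apply Rmin_r|apply Rmin_l]).
  assert (d <= d5) by (unfold d; eapply Rle_trans; [apply Rmin_r|]; eapply Rle_trans; [apply Rmin_r|apply Rmin_r]).
  set (t := Rmin (d / 2) T).
  assert (Ht : 0 < t <= T) by (unfold t; split; [apply Rmin_pos; lra | apply Rmin_r]).
  assert (Htd : t <= d / 2) by apply Rmin_l.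
  assert (Htt : Rabs (t - 0) < d) by (rewrite Rminus_0_r, Rabs_right; lra).
  exists (Dq 1%nat 0%nat t x), (Dq 0%nat 1%nat t x), (Dq 0%nat 0%nat t x), (V t x), (A t x).
  split. apply ext_x; auto.
  split. apply supD0; auto; lra.
  assert (Rabs (x - x) < d4) by (replace (x - x) with 0 by ring; rewrite Rabs_R0; lra).
  assert (Rabs (x - x) < d5) by (replace (x - x) with 0 by ring; rewrite Rabs_R0; lra).
  destruct (H1 t ltac:(lra) ltac:(lra)) as [S1 _].
  destruct (H2 t ltac:(lra) ltac:(lra)) as [S2 _].
  repeat split.
  - apply (S1 0%nat ltac:(simpl; lia) x Hx).
  - apply (S2 1%nat ltac:(simpl; lia) x Hx).
  - apply (S2 0%nat ltac:(simpl; lia) x Hx).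
  - left; apply H4; auto; lra.
  - left; apply H5; auto; lra.
Qed.

Lemma pde_closed t x : 0 <= t <= T -> a <= x <= b ->
  dirac_eq eps (V t x) (A t x) (Dq 1%nat 0%nat t x) (Dq 0%nat 1%nat t x) (Dq 0%nat 0%nat t x).
Proof.
  intros Ht Hx. apply dirac_Res.
  destruct (Req_dec t 0). subst. apply ext_t; auto. apply ext_x; auto; lra.
Qed.

End Ext.

End MP10.
Import MP10.

Module MP11.

Ltac vdes := repeat match goal with
  | v : V2 |- _ => let a:=fresh "a" in let b := fresh "b" in let c := fresh "c" in
      let d := fresh "d" in destruct v as [[a b] [c d]]
  | z : C |- _ => destruct z end.
Ltac vunf := cbv [free_op pot_op vsub vrscal vscal vadd sigma1 sigma3 Cplus Cmult Copp RtoC Ci ip vc1 vc2 vc3 vc4 vzero fst snd Res] in *.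
Ltac veq := vdes; vunf; apply pair_eq4; ring.
Ltac veqf := vdes; vunf; apply pair_eq4; field.

Definition schL tau (up um : V2) := vscal Ci (vrscal (/ (2 * tau)) (vsub up um)).
Definition schR eps h Vn An (upP umP upM umM upj umj u0 : V2) :=
  vadd (free_op eps (vrscal (/ (2 * h)) (vsub (vrscal (1 / 2) (vadd upP umP)) (vrscal (1 / 2) (vadd upM umM))))
                    (vrscal (1 / 2) (vadd upj umj))) (pot_op Vn An u0).

Lemma sifd_unfold eps tau h M Vn An Um U0 Up j :
  sifd2_eq eps tau h M Vn An Um U0 Up j ->
  schL tau (Up j) (Um j) = schR eps h Vn An (Up ((j + 1) mod M)%nat) (Um ((j + 1) mod M)%nat)
     (Up ((j + M - 1) mod M)%nat) (Um ((j + M - 1) mod M)%nat) (Up j) (Um j) (U0 j).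
Proof. auto. Qed.

Lemma err_alg eps tau h Vn An u1 u2 uP1 uP2 uM1 uM2 u0 p1 p2 pP1 pP2 pM1 pM2 p0 :
  schL tau u1 u2 = schR eps h Vn An uP1 uP2 uM1 uM2 u1 u2 u0 ->
  vscal Ci (vrscal (/ (2 * tau)) (vsub (vsub p1 u1) (vsub p2 u2))) =
  vadd (free_op eps (vrscal (/ (2 * h)) (vsub (vrscal (1 / 2) (vadd (vsub pP1 uP1) (vsub pP2 uP2)))
                                              (vrscal (1 / 2) (vadd (vsub pM1 uM1) (vsub pM2 uM2)))))
         (vrscal (1 / 2) (vadd (vsub p1 u1) (vsub p2 u2))))
    (vadd (pot_op Vn An (vsub p0 u0)) (vsub (schL tau p1 p2) (schR eps h Vn An pP1 pP2 pM1 pM2 p1 p2 p0))).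
Proof.
  intros H. apply vsub_zero.
  match goal with |- vsub ?X ?Y = _ =>
    replace (vsub X Y) with (vsub (schR eps h Vn An uP1 uP2 uM1 uM2 u1 u2 u0) (schL tau u1 u2))
    by (unfold schL, schR; veq) end.
  rewrite H. apply vsub_zero'. reflexivity.
Qed.

Lemma trunc_id eps tau h Vv Av ppj pmj ppp pmp ppm pmm p0j p0p p0m d10 d01 :
  vsub (schL tau ppj pmj) (schR eps h Vv Av ppp pmp ppm pmm ppj pmj p0j) =
  vadd (vsub (vscal Ci (vsub (vrscal (/ (2 * tau)) (vsub ppj pmj)) d10))
             (free_op eps (vadd (vsub (vrscal (/ (2 * h)) (vsub p0p p0m)) d01)
                                (vrscal (/ (2 * h)) (vsub (vsub (vrscal (1/2) (vadd ppp pmp)) p0p)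
                                                          (vsub (vrscal (1/2) (vadd ppm pmm)) p0m))))
                          (vsub (vrscal (1/2) (vadd ppj pmj)) p0j)))
       (Res eps d10 d01 p0j Vv Av).
Proof. unfold schL, schR. veq. Qed.

Lemma vadd_zero x : vadd x vzero = x.
Proof. veq. Qed.

Section Trunc.
Variables (a b T K eps : R) (Dq : nat -> nat -> R -> R -> V2) (V A : R -> R -> R) (M : nat).
Hypothesis Hab : a < b.
Hypothesis HT : 0 < T.
Hypothesis He : 0 < eps.
Hypothesis HK : 0 <= K.
Hypothesis Hr : regA a b T Dq.
Hypothesis Hb : Hbnd a b T K eps Dq.
Hypothesis HPc : forall t x, 0 <= t <= T -> a <= x <= b ->
     dirac_eq eps (V t x) (A t x) (Dq 1%nat 0%nat t x) (Dq 0%nat 1%nat t x) (Dq 0%nat 0%nat t x).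
Hypothesis HM : (1 <= M)%nat.

Lemma trunc tau t j : (j < M)%nat -> 0 < tau -> 0 <= t - tau -> t + tau <= T ->
  let P s k := Dq 0%nat 0%nat s (gridx a b M k) in
  let jp := ((j + 1) mod M)%nat in let jm := ((j + M - 1) mod M)%nat in
  vnorm (vsub (schL tau (P (t + tau) j) (P (t - tau) j))
     (schR eps (meshh a b M) (V t (gridx a b M j)) (A t (gridx a b M j))
        (P (t + tau) jp) (P (t - tau) jp) (P (t + tau) jm) (P (t - tau) jm)
        (P (t + tau) j) (P (t - tau) j) (P t j)))
   <= 96 * K * (meshh a b M ^ 2 / eps + tau ^ 2 / eps ^ 3).
Proof.
  intros Hj Ht H0 H1 P jp jm. unfold P.
  set (h := meshh a b M). set (xj := gridx a b M j).
  assert (Hh : 0 < h) by (apply h_pos; auto).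
  assert (Hxj : a <= xj <= b) by (pose proof (grid_in a b M Hab HM j Hj); unfold xj; pose proof (h_pos a b M Hab HM); lra).
  assert (Htt : 0 <= t <= T) by lra.
  rewrite trunc_id with (d10 := Dq 1%nat 0%nat t xj) (d01 := Dq 0%nat 1%nat t xj)
    (p0p := Dq 0%nat 0%nat t (gridx a b M jp)) (p0m := Dq 0%nat 0%nat t (gridx a b M jm)).
  pose proof (HPc t xj Htt Hxj) as Hp. apply dirac_Res in Hp. rewrite Hp, vadd_zero.
  eapply Rle_trans. apply vn_sub. rewrite vn_i.
  pose proof (T1 a b T K eps Dq Hr Hb HK He t tau xj Ht H0 H1 Hxj) as B1.
  pose proof (T2 a b T K eps Dq Hr Hb HK He t tau xj Ht H0 H1 Hxj) as B2.
  assert (B3 : vnorm (vsub (vrscal (/ (2 * h)) (vsub (Dq 0%nat 0%nat t (gridx a b M jp)) (Dq 0%nat 0%nat t (gridx a b M jm))))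
                  (Dq 0%nat 1%nat t xj)) <= 16 * K * h ^ 2).
  { apply (grid_central a b M Hab HM (Dq 0%nat 0%nat t) (Dq 0%nat 1%nat t) (Dq 0%nat 2%nat t) K j Hj HK).
    apply (xD0 a b T Dq Hr t Htt). apply (xD1 a b T Dq Hr t Htt). apply (lipD02 a b T K eps Dq Hb t Htt).
    apply (perD a b T Dq Hr 0 0 t ltac:(lia) Htt). apply (perD a b T Dq Hr 0 1 t ltac:(lia) Htt).
    apply (perD a b T Dq Hr 0 2 t ltac:(lia) Htt). }
  assert (B4 : vnorm (vrscal (/ (2 * h)) (vsub (qf Dq t tau (gridx a b M jp)) (qf Dq t tau (gridx a b M jm))))
     <= 16 * (K / eps ^ 2) * tau ^ 2).
  { apply (grid_lipdiff a b M Hab HM (qf Dq t tau) (16 * (K / eps ^ 2) * tau ^ 2) j Hj).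
    pose proof (Kpos K eps HK He 2). pose proof (pow2_ge_0 tau). nra.
    unfold qf. rewrite (perD a b T Dq Hr 0 0 (t + tau) ltac:(lia) ltac:(lra)),
      (perD a b T Dq Hr 0 0 (t - tau) ltac:(lia) ltac:(lra)), (perD a b T Dq Hr 0 0 t ltac:(lia) ltac:(lra)). auto.
    intros x y Hx Hy. eapply Rle_trans. apply (Tq a b T K eps Dq Hr Hb HK He t tau x y Ht H0 H1 Hx Hy).
    right; ring. }
  unfold qf in B4.
  pose proof (vn_free eps
    (vadd (vsub (vrscal (/ (2 * h)) (vsub (Dq 0%nat 0%nat t (gridx a b M jp)) (Dq 0%nat 0%nat t (gridx a b M jm))))
             (Dq 0%nat 1%nat t xj))
       (vrscal (/ (2 * h))
          (vsub (vsub (vrscal (1 / 2) (vadd (Dq 0%nat 0%nat (t + tau) (gridx a b M jp)) (Dq 0%nat 0%nat (t - tau) (gridx a b M jp))))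
                   (Dq 0%nat 0%nat t (gridx a b M jp)))
             (vsub (vrscal (1 / 2) (vadd (Dq 0%nat 0%nat (t + tau) (gridx a b M jm)) (Dq 0%nat 0%nat (t - tau) (gridx a b M jm))))
                (Dq 0%nat 0%nat t (gridx a b M jm))))))
    (vsub (vrscal (1 / 2) (vadd (Dq 0%nat 0%nat (t + tau) xj) (Dq 0%nat 0%nat (t - tau) xj))) (Dq 0%nat 0%nat t xj)) He) as B5.
  pose proof (vn_add
    (vsub (vrscal (/ (2 * h)) (vsub (Dq 0%nat 0%nat t (gridx a b M jp)) (Dq 0%nat 0%nat t (gridx a b M jm))))
             (Dq 0%nat 1%nat t xj))
    (vrscal (/ (2 * h))
          (vsub (vsub (vrscal (1 / 2) (vadd (Dq 0%nat 0%nat (t + tau) (gridx a b M jp)) (Dq 0%nat 0%nat (t - tau) (gridx a b M jp))))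
                   (Dq 0%nat 0%nat t (gridx a b M jp)))
             (vsub (vrscal (1 / 2) (vadd (Dq 0%nat 0%nat (t + tau) (gridx a b M jm)) (Dq 0%nat 0%nat (t - tau) (gridx a b M jm))))
                (Dq 0%nat 0%nat t (gridx a b M jm)))))) as B6.
  set (Z := vsub (vrscal (/ (2 * tau)) (vsub (Dq 0%nat 0%nat (t + tau) xj) (Dq 0%nat 0%nat (t - tau) xj))) (Dq 1%nat 0%nat t xj)) in *.
  assert (Hie : 0 < / eps) by (apply Rinv_0_lt_compat; lra).
  assert (E1 : K / eps ^ 3 = / eps * (K / eps ^ 2)) by (field; lra).
  assert (E2 : 96 * K * (h ^ 2 / eps + tau ^ 2 / eps ^ 3) = 96 * (K / eps ^ 3) * tau ^ 2 + 96 * / eps * (K * h ^ 2))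
    by (field; lra).
  rewrite E2. rewrite E1 in B1 |- *.
  set (W := K / eps ^ 2) in *.
  assert (0 <= W) by (apply Kpos; auto).
  assert (0 <= K * h ^ 2) by (pose proof (pow2_ge_0 h); nra).
  pose proof (pow2_ge_0 tau).
  assert (B7 : / eps * (vnorm (vadd
    (vsub (vrscal (/ (2 * h)) (vsub (Dq 0%nat 0%nat t (gridx a b M jp)) (Dq 0%nat 0%nat t (gridx a b M jm))))
             (Dq 0%nat 1%nat t xj))
    (vrscal (/ (2 * h))
          (vsub (vsub (vrscal (1 / 2) (vadd (Dq 0%nat 0%nat (t + tau) (gridx a b M jp)) (Dq 0%nat 0%nat (t - tau) (gridx a b M jp))))
                   (Dq 0%nat 0%nat t (gridx a b M jp)))
             (vsub (vrscal (1 / 2) (vadd (Dq 0%nat 0%nat (t + tau) (gridx a b M jm)) (Dq 0%nat 0%nat (t - tau) (gridx a b M jm))))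
                (Dq 0%nat 0%nat t (gridx a b M jm)))))) +
     vnorm (vsub (vrscal (1 / 2) (vadd (Dq 0%nat 0%nat (t + tau) xj) (Dq 0%nat 0%nat (t - tau) xj))) (Dq 0%nat 0%nat t xj)))
    <= / eps * (16 * K * h ^ 2 + 32 * W * tau ^ 2)).
  { apply Rmult_le_compat_l. lra. lra. }
  assert (/ eps * (16 * K * h ^ 2 + 32 * W * tau ^ 2) <= 32 * (/ eps * W) * tau ^ 2 + 96 * / eps * (K * h ^ 2)).
  { assert (0 <= / eps * (K * h ^ 2)) by (apply Rmult_le_pos; lra). nra. }
  assert (0 <= / eps * W) by (apply Rmult_le_pos; lra).
  nra.
Qed.

End Trunc.

End MP11.
Import MP11.

Module MP12.

Ltac vdes := repeat match goal with
  | v : V2 |- _ => let a:=fresh "a" in let b := fresh "b" in let c := fresh "c" in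
      let d := fresh "d" in destruct v as [[a b] [c d]]
  | z : C |- _ => destruct z end.
Ltac vunf := cbv [free_op pot_op vsub vrscal vscal vadd sigma1 sigma3 Cplus Cmult Copp RtoC Ci ip vc1 vc2 vc3 vc4 vzero fst snd Res first_step] in *.
Ltac veq := vdes; vunf; apply pair_eq4; ring.

Lemma fs_id eps tau Vv Av dt d0 d10 d01 :
  vsub dt (first_step eps tau Vv Av d0 d01) =
  vadd (vadd (vsub (vsub dt d0) (vrscal (tau - 0) d10))
             (vrscal (sin (tau / eps) - tau / eps) (vadd (sigma1 d01) (vscal Ci (sigma3 d0)))))
       (vscal (0, - tau) (Res eps d10 d01 d0 Vv Av)).
Proof. vdes; vunf; apply pair_eq4; unfold Rdiv; ring. Qed.

Lemma fs_bound a b T K eps (Dq : nat -> nat -> R -> R -> V2) (V A : R -> R -> R) tau x :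
  0 < eps -> 0 <= K -> regA a b T Dq -> Hbnd a b T K eps Dq ->
  (forall t x, 0 <= t <= T -> a <= x <= b ->
     dirac_eq eps (V t x) (A t x) (Dq 1%nat 0%nat t x) (Dq 0%nat 1%nat t x) (Dq 0%nat 0%nat t x)) ->
  0 < tau <= T -> a <= x <= b ->
  vnorm (vsub (Dq 0%nat 0%nat tau x)
     (first_step eps tau (V 0 x) (A 0 x) (Dq 0%nat 0%nat 0 x) (Dq 0%nat 1%nat 0 x))) <= 18 * K * (tau ^ 2 / eps ^ 2).
Proof.
  intros He HK Hr Hb HPc Ht Hx.
  rewrite fs_id with (d10 := Dq 1%nat 0%nat 0 x).
  pose proof (HPc 0 x ltac:(lra) Hx) as Hp. apply dirac_Res in Hp. rewrite Hp.
  replace (vscal (0, - tau) vzero) with vzero by veq. rewrite vadd_zero.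
  eapply Rle_trans. apply vn_add.
  assert (HL: vlip 0 T (fun s => Dq 1%nat 0%nat s x) (4 * (K / eps ^ 2))).
  { apply lip_of_der with (G2 := fun s => Dq 2%nat 0%nat s x). apply (tder a b T Dq Hr); auto.
    intros; apply (supD a b T K eps Dq Hb); auto. }
  assert (0 <= 4 * (K / eps ^ 2)) by (pose proof (Kpos K eps HK He 2); lra).
  pose proof (tay2 0 T _ _ _ 0 tau H (tder a b T Dq Hr 0 x ltac:(lia) Hx) HL ltac:(lra) ltac:(lra)) as A1.
  cbv beta in A1.
  rewrite vn_scal.
  pose proof (vn_add (sigma1 (Dq 0%nat 1%nat 0 x)) (vscal Ci (sigma3 (Dq 0%nat 0%nat 0 x)))) as A2.
  rewrite vn_s1, vn_i, vn_s3 in A2.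
  pose proof (supD01 a b T K eps Dq Hb 0 x ltac:(lra) Hx).
  pose proof (supD0 a b T K eps Dq Hb 0 x ltac:(lra) Hx).
  assert (Hs : Rabs (sin (tau / eps) - tau / eps) <= (tau / eps) ^ 2).
  { apply sin_err. apply Rdiv_le_0_compat; lra. }
  pose proof (Rabs_pos (sin (tau / eps) - tau / eps)).
  pose proof (vn_ge0 (vadd (sigma1 (Dq 0%nat 1%nat 0 x)) (vscal Ci (sigma3 (Dq 0%nat 0%nat 0 x))))).
  assert (Rabs (sin (tau / eps) - tau / eps) * vnorm (vadd (sigma1 (Dq 0%nat 1%nat 0 x)) (vscal Ci (sigma3 (Dq 0%nat 0%nat 0 x))))
     <= (tau / eps) ^ 2 * (2 * K)).
  { apply Rmult_le_compat; auto. lra. }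
  replace (4 * (4 * (K / eps ^ 2)) * (tau - 0) ^ 2) with (16 * K * (tau ^ 2 / eps ^ 2)) in A1 by (field; lra).
  replace ((tau / eps) ^ 2 * (2 * K)) with (2 * K * (tau ^ 2 / eps ^ 2)) in H4 by (field; lra).
  lra.
Qed.

End MP12.
Import MP12.

Module MP13.

Ltac vdes := repeat match goal with
  | v : V2 |- _ => let a:=fresh "a" in let b := fresh "b" in let c := fresh "c" in
      let d := fresh "d" in destruct v as [[a b] [c d]]
  | z : C |- _ => destruct z end.
Ltac vunf := cbv [free_op pot_op vsub vrscal vscal vadd sigma1 sigma3 Cplus Cmult Copp RtoC Ci ip vc1 vc2 vc3 vc4 vzero fst snd Res first_step] in *.
Ltac veq := vdes; vunf; apply pair_eq4; ring.

Lemma ip_self_sub x : ip (vsub x x) (vsub x x) = 0.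
Proof. vdes; vunf; ring. Qed.

Lemma exp_le a b : a <= b -> exp a <= exp b.
Proof. intros. destruct (Req_dec a b). subst; lra. left; apply exp_increasing; lra. Qed.

Lemma SS_bound M (f : nat -> V2) B : 0 <= B -> (forall j, (j < M)%nat -> vnorm (f j) <= B) ->
  SS M f <= INR M * B ^ 2.
Proof.
  intros HB H. unfold SS. rewrite <- gsum_const. apply gsum_le. intros j Hj.
  rewrite <- vn_sq. pose proof (H j Hj). pose proof (vn_ge0 (f j)). apply pow_incr. lra.
Qed.

End MP13.
Import MP13.

Theorem theorem3 (a b T : R) (V A1 : R -> R -> R) (Vmax A1max : R)
  (Phi : R -> R -> R -> V2) (D : R -> nat -> nat -> R -> R -> V2) :
  a < b -> 0 < T ->
  (* (B) *)
  cont_rect T a b V -> cont_rect T a b A1 ->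
  is_absmax T a b V Vmax -> is_absmax T a b A1 A1max ->
  (* D eps r s = d_t^r d_x^s Phi_eps *)
  (forall eps, 0 < eps <= 1 -> forall t x, 0 <= t <= T -> a <= x <= b ->
     D eps 0%nat 0%nat t x = Phi eps t x) ->
  (* (A), qualitative part (includes periodic boundary conditions) *)
  (forall eps, 0 < eps <= 1 -> regA a b T (D eps)) ->
  (* (A), bounds ||d_t^r d_x^s Phi|| <~ eps^{-r}, uniformly in eps *)
  (exists K, forall eps, 0 < eps <= 1 -> forall r t, (r <= 3)%nat -> 0 <= t <= T ->
     Wbnd (3 - r) a b (fun s => D eps r s t) (K / eps ^ r)) ->
  (* Phi_eps solves the Dirac equation *)
  (forall eps, 0 < eps <= 1 -> forall t x, 0 < t <= T -> a < x < b ->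
     dirac_eq eps (V t x) (A1 t x) (D eps 1%nat 0%nat t x) (D eps 0%nat 1%nat t x)
       (D eps 0%nat 0%nat t x)) ->
  exists h0 tau0 C, 0 < h0 /\ 0 < tau0 /\
   forall (eps : R) (M : nat) (tau : R) (U : nat -> nat -> V2),
   0 < eps <= 1 -> (1 <= M)%nat -> meshh a b M <= h0 ->
   0 < tau <= tau0 -> tau * (Vmax + A1max) <= 1 ->
   (forall j, (j < M)%nat -> U 0%nat j = Phi eps 0 (gridx a b M j)) ->
   (forall j, (j < M)%nat -> U 1%nat j =
      first_step eps tau (V 0 (gridx a b M j)) (A1 0 (gridx a b M j))
        (Phi eps 0 (gridx a b M j)) (D eps 0%nat 1%nat 0 (gridx a b M j))) ->
   (forall n j, (1 <= n)%nat -> INR (S n) * tau <= T -> (j < M)%nat ->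
      sifd2_eq eps tau (meshh a b M) M
        (V (INR n * tau) (gridx a b M j)) (A1 (INR n * tau) (gridx a b M j))
        (U (n - 1)%nat) (U n) (U (S n)) j) ->
   forall n : nat, INR n * tau <= T ->
     l2norm (meshh a b M) M
       (fun j => vsub (Phi eps (INR n * tau) (gridx a b M j)) (U n j))
     <= C * (meshh a b M ^ 2 / eps + tau ^ 2 / eps ^ 3).
Proof.
  intros Hab HT HVc HAc HVm HAm HD HrA [K HKb] HPDE.
  assert (HK : 0 <= K).
  { destruct (HKb 1 ltac:(lra) 0%nat 0 ltac:(lia) ltac:(lra)) as [H1 _].
    pose proof (H1 0%nat ltac:(simpl; lia) a ltac:(lra)) as H2.
    replace (K / 1 ^ 0) with K in H2 by (simpl; field).
    pose proof (vn_ge0 (D 1 0%nat 0%nat 0 a)). lra. }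
  assert (HVm0 : 0 <= Vmax) by (destruct HVm as [_ [t0 [x0 [_ [_ E]]]]]; rewrite <- E; apply Rabs_pos).
  assert (HAm0 : 0 <= A1max) by (destruct HAm as [_ [t0 [x0 [_ [_ E]]]]]; rewrite <- E; apply Rabs_pos).
  set (m := Vmax + A1max).
  set (kap := 1 + 4 * m ^ 2).
  assert (Hkap : 1 <= kap) by (unfold kap; pose proof (pow2_ge_0 m); lra).
  set (Q := exp (4 * kap * T) * (b - a) * (324 + 73728 * T)).
  assert (HQ : 0 <= Q) by (unfold Q; pose proof (exp_pos (4 * kap * T)); apply Rmult_le_pos; [apply Rmult_le_pos|]; lra).
  exists 1, (Rmin T (1 / (2 * kap))), (K * sqrt Q).
  split; [lra|]. split; [apply Rmin_pos; [lra| apply Rdiv_lt_0_compat; lra]|].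
  intros eps M tau U Heps HM Hh Htau Hstab HU0 HU1 Hsch n Hn.
  set (Dq := D eps).
  assert (He : 0 < eps) by lra.
  pose proof (HrA eps Heps) as Hr. fold Dq in Hr.
  assert (Hb : Hbnd a b T K eps Dq) by (intros r t Hr' Ht; apply HKb; auto).
  pose proof (pde_closed a b T K eps Dq V A1 Hab HT He HK Hr Hb HVc HAc (HPDE eps Heps)) as HPc.
  set (h := meshh a b M).
  assert (Hh0 : 0 < h) by (apply h_pos; auto).
  assert (HhM : INR M * h = b - a) by (apply Mh; auto).
  assert (HtT : tau <= T) by (destruct Htau as [_ H1]; eapply Rle_trans; [exact H1| apply Rmin_l]).
  assert (Htk : tau * kap <= 1 / 2).
  { destruct Htau as [H0 H1]. assert (tau <= 1 / (2 * kap)) by (eapply Rle_trans; [exact H1| apply Rmin_r]).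
    apply (Rmult_le_compat_r kap) in H; [|lra]. replace (1 / (2 * kap) * kap) with (1 / 2) in H by (field; lra). lra. }
  assert (Hgrid : forall j, (j < M)%nat -> a <= gridx a b M j <= b).
  { intros j Hj. pose proof (grid_in a b M Hab HM j Hj). fold h in H. lra. }
  assert (HPhi : forall s j, 0 <= s <= T -> (j < M)%nat -> Phi eps s (gridx a b M j) = Dq 0%nat 0%nat s (gridx a b M j)).
  { intros s j Hs Hj. unfold Dq. rewrite HD; auto. }
  assert (Hnt : 0 <= INR n * tau) by (pose proof (pos_INR n); apply Rmult_le_pos; lra).
  set (e := fun k j => vsub (Dq 0%nat 0%nat (INR k * tau) (gridx a b M j)) (U k j)).
  assert (Hl2 : l2norm h M (fun j => vsub (Phi eps (INR n * tau) (gridx a b M j)) (U n j)) = sqrt (h * SS M (e n))).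
  { unfold l2norm. f_equal. f_equal. unfold SS. apply gsum_ext. intros j Hj. rewrite HPhi, vn_sq; auto. }
  rewrite Hl2.
  set (X := h ^ 2 / eps + tau ^ 2 / eps ^ 3).
  assert (HX0 : 0 <= h ^ 2 / eps) by (apply Rdiv_le_0_compat; [apply pow2_ge_0|lra]).
  assert (HX1 : tau ^ 2 / eps ^ 2 <= tau ^ 2 / eps ^ 3).
  { apply Rmult_le_compat_l. apply pow2_ge_0. apply Rinv_le_contravar. apply pow_lt; lra.
    replace (eps ^ 3) with (eps ^ 2 * eps) by ring. pose proof (pow_lt eps 2 He). nra. }
  assert (HX2 : 0 <= tau ^ 2 / eps ^ 2) by (apply Rdiv_le_0_compat; [apply pow2_ge_0| apply pow_lt; lra]).
  assert (HX : 0 <= X) by (unfold X; lra).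
  assert (Hclaim : h * SS M (e n) <= (K * sqrt Q * X) ^ 2).
  { assert (HSS : forall k, 0 <= SS M (e k)) by (intros; apply SS_ge0).
    assert (He0 : SS M (e 0%nat) = 0).
    { transitivity (gsum (fun _ => 0) M); [| rewrite gsum_const; ring].
      unfold SS. apply gsum_ext. intros j Hj. unfold e.
      replace (INR 0 * tau) with 0 by (simpl; ring).
      rewrite HU0 by auto. rewrite HPhi by (auto; lra). apply ip_self_sub. }
    destruct n as [|n'].
    { rewrite He0, Rmult_0_r. apply pow2_ge_0. }
    set (B := 96 * K * X).
    assert (HB : 0 <= B) by (unfold B; apply Rmult_le_pos; lra).
    set (G := 4 * (INR M * B ^ 2)).
    assert (HG : 0 <= G) by (unfold G; pose proof (pos_INR M); pose proof (pow2_ge_0 B); nra).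
    set (E := fun k => SS M (e (S k)) + SS M (e k)).
    assert (Hstep : forall k, (1 <= k <= n')%nat -> E k - E (k - 1)%nat <= tau * kap * (E k + E (k - 1)%nat) + tau * G).
    { intros k Hk.
      assert (HkT : INR (S k) * tau <= T).
      { apply Rle_trans with (INR (S n') * tau); auto. apply Rmult_le_compat_r; [lra|]. apply le_INR; lia. }
      set (t := INR k * tau).
      assert (Et1 : INR (S k) * tau = t + tau) by (unfold t; rewrite S_INR; ring).
      assert (Et2 : INR (k - 1) * tau = t - tau) by (unfold t; rewrite minus_INR by lia; simpl; ring).
      assert (Ht0 : 0 <= t - tau) by (rewrite <- Et2; apply Rmult_le_pos; [apply pos_INR|lra]).
      assert (Ht1 : t + tau <= T) by (rewrite <- Et1; auto).
      assert (HtI : 0 <= t <= T) by lra.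
      set (xi := fun j => vsub (schL tau (Dq 0%nat 0%nat (INR (S k) * tau) (gridx a b M j)) (Dq 0%nat 0%nat (INR (k-1) * tau) (gridx a b M j)))
         (schR eps h (V t (gridx a b M j)) (A1 t (gridx a b M j))
           (Dq 0%nat 0%nat (INR (S k) * tau) (gridx a b M ((j+1) mod M))) (Dq 0%nat 0%nat (INR (k-1) * tau) (gridx a b M ((j+1) mod M)))
           (Dq 0%nat 0%nat (INR (S k) * tau) (gridx a b M ((j+M-1) mod M))) (Dq 0%nat 0%nat (INR (k-1) * tau) (gridx a b M ((j+M-1) mod M)))
           (Dq 0%nat 0%nat (INR (S k) * tau) (gridx a b M j)) (Dq 0%nat 0%nat (INR (k-1) * tau) (gridx a b M j))
           (Dq 0%nat 0%nat t (gridx a b M j)))).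
      assert (Hm : forall j, (j < M)%nat -> Rabs (V t (gridx a b M j)) + Rabs (A1 t (gridx a b M j)) <= m).
      { intros j Hj. destruct HVm as [HV1 _]. destruct HAm as [HA1 _].
        pose proof (HV1 t (gridx a b M j) HtI (Hgrid j Hj)). pose proof (HA1 t (gridx a b M j) HtI (Hgrid j Hj)).
        unfold m; lra. }
      assert (Hen : SS M (e (S k)) - SS M (e (k - 1)%nat) <=
          tau * (4 * m ^ 2 * SS M (e k) + SS M (e (S k)) + SS M (e (k - 1)%nat)) + 4 * tau * SS M xi).
      { apply (energy_step M h tau eps m (e (S k)) (e k) (e (k-1)%nat) xi (fun j => V t (gridx a b M j))
           (fun j => A1 t (gridx a b M j)) HM (proj1 Htau) He Hh0 Hm).
        intros j Hj. pose proof (Hsch k j ltac:(lia) HkT Hj) as Hs. apply sifd_unfold in Hs.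
        exact (err_alg _ _ _ _ _ _ _ _ _ _ _ _
           (Dq 0%nat 0%nat (INR (S k) * tau) (gridx a b M j)) (Dq 0%nat 0%nat (INR (k-1) * tau) (gridx a b M j))
           (Dq 0%nat 0%nat (INR (S k) * tau) (gridx a b M ((j+1) mod M))) (Dq 0%nat 0%nat (INR (k-1) * tau) (gridx a b M ((j+1) mod M)))
           (Dq 0%nat 0%nat (INR (S k) * tau) (gridx a b M ((j+M-1) mod M))) (Dq 0%nat 0%nat (INR (k-1) * tau) (gridx a b M ((j+M-1) mod M)))
           (Dq 0%nat 0%nat t (gridx a b M j)) Hs). }
      assert (Hxi : SS M xi <= INR M * B ^ 2).
      { apply SS_bound; auto. intros j Hj. unfold xi. rewrite Et1, Et2.
        pose proof (trunc a b T K eps Dq V A1 M Hab He HK Hr Hb HPc HM tau t j Hj (proj1 Htau) Ht0 Ht1) as Htr.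
        cbv zeta in Htr. exact Htr. }
      unfold E. replace (S (k - 1)) with k by lia.
      set (s1 := SS M (e (S k))) in *. set (s0 := SS M (e k)) in *. set (sm := SS M (e (k - 1)%nat)) in *.
      pose proof (HSS (S k)). pose proof (HSS k). pose proof (HSS (k - 1)%nat). fold s1 s0 sm in H, H0, H1.
      assert (tau * (4 * m ^ 2 * s0 + s1 + sm) <= tau * kap * (s1 + s0 + (s0 + sm))).
      { rewrite (Rmult_assoc tau kap). apply Rmult_le_compat_l. lra. unfold kap. pose proof (pow2_ge_0 m).
        assert (0 <= m ^ 2 * s1) by nra. assert (0 <= m ^ 2 * sm) by nra. nra. }
      assert (4 * tau * SS M xi <= tau * G) by (unfold G; destruct Htau; nra).
      lra. }
    pose proof (gronwall E tau kap G n' (proj1 Htau) ltac:(lra) Htk HG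
      ltac:(intros k; unfold E; pose proof (HSS (S k)); pose proof (HSS k); lra) Hstep n' (Nat.le_refl n')) as Hg.
    set (B1 := 18 * K * (tau ^ 2 / eps ^ 2)).
    assert (HB1 : 0 <= B1) by (unfold B1; apply Rmult_le_pos; lra).
    assert (HE0 : E 0%nat <= INR M * B1 ^ 2).
    { unfold E. rewrite He0, Rplus_0_r. apply SS_bound; auto. intros j Hj. unfold e.
      rewrite HU1 by auto. rewrite HPhi by (auto; lra).
      replace (INR 1 * tau) with tau by (simpl; ring).
      apply (fs_bound a b T K eps Dq V A1 tau (gridx a b M j) He HK Hr Hb HPc); [lra | apply Hgrid; auto]. }
    assert (HEn : SS M (e (S n')) <= E n') by (unfold E; pose proof (HSS n'); lra).
    assert (Hn' : INR n' * tau <= T).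
    { apply Rle_trans with (INR (S n') * tau); auto. apply Rmult_le_compat_r; [lra|]. apply le_INR; lia. }
    assert (Hex : exp (4 * kap * (INR n' * tau)) <= exp (4 * kap * T)).
    { apply exp_le. apply Rmult_le_compat_l; lra. }
    pose proof (exp_pos (4 * kap * (INR n' * tau))).
    pose proof (pos_INR n'). pose proof (pos_INR M).
    assert (Hnt' : 0 <= INR n' * tau) by (apply Rmult_le_pos; lra).
    assert (H3 : E 0%nat + 2 * INR n' * tau * G <= INR M * B1 ^ 2 + 2 * T * G).
    { assert (2 * INR n' * tau * G <= 2 * T * G) by (replace (2 * INR n' * tau * G) with (2 * (INR n' * tau) * G) by ring; nra). lra. }
    assert (H4 : E n' <= exp (4 * kap * T) * (INR M * B1 ^ 2 + 2 * T * G)).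
    { assert (0 <= E 0%nat) by (unfold E; pose proof (HSS 1%nat); pose proof (HSS 0%nat); lra).
      assert (0 <= 2 * INR n' * tau * G) by (replace (2 * INR n' * tau * G) with (2 * (INR n' * tau) * G) by ring;
        apply Rmult_le_pos; lra).
      eapply Rle_trans. exact Hg. apply Rmult_le_compat; lra. }
    assert (H5 : h * (INR M * B1 ^ 2 + 2 * T * G) = (b - a) * (B1 ^ 2 + 8 * T * B ^ 2)).
    { unfold G. rewrite <- HhM. ring. }
    assert (HB1X : B1 <= 18 * K * X) by (unfold B1, X; apply Rmult_le_compat_l; lra).
    assert (H6 : B1 ^ 2 + 8 * T * B ^ 2 <= (324 + 73728 * T) * (K ^ 2 * X ^ 2)).
    { assert (B1 ^ 2 <= (18 * K * X) ^ 2) by (apply pow_incr; lra).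
      unfold B. lra. }
    assert (H7 : (K * sqrt Q * X) ^ 2 = Q * (K ^ 2 * X ^ 2)).
    { replace ((K * sqrt Q * X) ^ 2) with (sqrt Q ^ 2 * (K ^ 2 * X ^ 2)) by ring.
      rewrite pow2_sqrt; auto. }
    rewrite H7.
    apply Rle_trans with (h * E n'). apply Rmult_le_compat_l; lra.
    apply Rle_trans with (h * (exp (4 * kap * T) * (INR M * B1 ^ 2 + 2 * T * G))). apply Rmult_le_compat_l; lra.
    replace (h * (exp (4 * kap * T) * (INR M * B1 ^ 2 + 2 * T * G))) with
      (exp (4 * kap * T) * (h * (INR M * B1 ^ 2 + 2 * T * G))) by ring.
    rewrite H5. unfold Q.
    replace (exp (4 * kap * T) * (b - a) * (324 + 73728 * T) * (K ^ 2 * X ^ 2)) with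
      (exp (4 * kap * T) * ((b - a) * ((324 + 73728 * T) * (K ^ 2 * X ^ 2)))) by ring.
    apply Rmult_le_compat_l. pose proof (exp_pos (4 * kap * T)); lra.
    apply Rmult_le_compat_l. lra. exact H6. }
  replace (K * sqrt Q * (h ^ 2 / eps + tau ^ 2 / eps ^ 3)) with (K * sqrt Q * X) by reflexivity.
  rewrite <- (sqrt_pow2 (K * sqrt Q * X)).
  apply sqrt_le_1_alt; auto.
  pose proof (sqrt_pos Q). apply Rmult_le_pos; auto. apply Rmult_le_pos; auto.
Qed.
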